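(* Assume (C1) and (C2). Let $m_*:=\inf_{u\in\mathcal{M}}I(u)$ and $c_*:=\inf_{u\in\mathcal{N}}I(u)$. Then $m_*>0$ and $c_*>0$, and both infima are achieved: there exist $u_0\in\mathcal{M}$ with $I(u_0)=m_*$ and $\bar u\in\mathcal{N}$ with $I(\bar u)=c_*$.
   Context: Fix real numbers $p,q,r$ with $1<p<q$, $\frac p2$ a positive integer, and $r\ge1$, and functions $a,b,c:\mathbb{Z}\to(0,+\infty)$. Conditions: - (C1) There is $b_0>0$ with $b(n)\ge b_0$ for all $n$ and $b(n)\to+\infty$ as $|n|\to\infty$. - (C2) There is $c_0>0$ with $c(n)\le c_0$ for all $n$ and $\sum_n c(n)<+\infty$. Notation for a real sequence $u=(u(n))_{n\in\mathbb{Z}}$: $\Delta u(n)=u(n+1)-u(n)$, $u^+(n)=\max\{u(n),0\}$, $u^-(n)=\min\{u(n),0\}$. Spaces: - $E$ is the set of real sequences $u$ with $\|u\|:=\big(\sum_n[a(n)|\Delta u(n)|^p+b(n)|u(n)|^p]\big)^{1/p}<\infty$. - $\mathcal{D}=\{u\in E:\sum_n c(n)|u(n)|^q\ln|u(n)|^r<+\infty\}$, where terms with $u(n)=0$ are read as $0$. For $u,v\in\mathcal{D}$: - $I(u)=\frac1p\|u\|^p+\frac{r}{q^2}\sum_n c(n)|u(n)|^q-\frac1q\sum_n c(n)|u(n)|^q\ln|u(n)|^r$. - $\langle I'(u),v\rangle=\sum_n[a(n)|\Delta u(n)|^{p-2}\Delta u(n)\Delta v(n)+b(n)|u(n)|^{p-2}u(n)v(n)]-\sum_n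 c(n)|u(n)|^{q-2}u(n)v(n)\ln|u(n)|^r$. Sets: - $\mathcal{N}=\{u\in\mathcal{D}:u\ne0,\ \langle I'(u),u\rangle=0\}$. - $\mathcal{M}=\{u\in\mathcal{D}:u^+\ne0,\ u^-\neq0,\ \langle I'(u),u^+\rangle=0,\ \langle I'(u),u^-\rangle=0\}$. *)

(* Defs.v *)
From Stdlib Require Import Reals ZArith.
From Coquelicot Require Import Coquelicot.
Open Scope R_scope.

(* x^y for x >= 0, with the convention 0^y = 0 (Stdlib's Rpower 0 y = 1). *)
Definition rpow (x y : R) : R :=
  if Req_EM_T x 0 then 0 else Rpower x y.

Definition exZ (f : Z -> R) : Prop :=
  ex_series (fun n : nat => f (Z.of_nat n)) /\
  ex_series (fun n : nat => f (- Z.of_nat (S n))%Z).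

Definition sumZ (f : Z -> R) : R :=
  Series (fun n : nat => f (Z.of_nat n)) +
  Series (fun n : nat => f (- Z.of_nat (S n))%Z).

Definition Delta (u : Z -> R) (n : Z) : R := u (n + 1)%Z - u n.
Definition posp (u : Z -> R) : Z -> R := fun n => Rmax (u n) 0.
Definition negp (u : Z -> R) : Z -> R := fun n => Rmin (u n) 0.

(* ln |t|^r, read as ln (|t|^r); terms with t = 0 read as 0 *)
Definition lnabs (r t : R) : R := ln (rpow (Rabs t) r).

Definition normE_p (p : R) (a b : Z -> R) (u : Z -> R) : Z -> R :=
  fun n => a n * rpow (Rabs (Delta u n)) p + b n * rpow (Rabs (u n)) p.

Definition inE (p : R) (a b : Z -> R) (u : Z -> R) : Prop :=
  exZ (normE_p p a b u).

Definition normE (p : R) (a b : Z -> R) (u : Z -> R) : R :=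
  rpow (sumZ (normE_p p a b u)) (1 / p).

Definition logterm (q r : R) (c : Z -> R) (u : Z -> R) : Z -> R :=
  fun n => c n * rpow (Rabs (u n)) q * lnabs r (u n).

Definition inD (p q r : R) (a b c : Z -> R) (u : Z -> R) : Prop :=
  inE p a b u /\ exZ (fun n => Rabs (logterm q r c u n)).

Definition Ifun (p q r : R) (a b c : Z -> R) (u : Z -> R) : R :=
  1 / p * rpow (normE p a b u) p
  + r / (q ^ 2) * sumZ (fun n => c n * rpow (Rabs (u n)) q)
  - 1 / q * sumZ (logterm q r c u).

Definition dI (p q r : R) (a b c : Z -> R) (u v : Z -> R) : R :=
  sumZ (fun n => a n * rpow (Rabs (Delta u n)) (p - 2) * Delta u n * Delta v n
               + b n * rpow (Rabs (u n)) (p - 2) * u n * v n)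
  - sumZ (fun n => c n * rpow (Rabs (u n)) (q - 2) * u n * v n * lnabs r (u n)).

Definition Nset (p q r : R) (a b c : Z -> R) (u : Z -> R) : Prop :=
  inD p q r a b c u /\ u <> (fun _ => 0) /\ dI p q r a b c u u = 0.

Definition Mset (p q r : R) (a b c : Z -> R) (u : Z -> R) : Prop :=
  inD p q r a b c u /\ posp u <> (fun _ => 0) /\ negp u <> (fun _ => 0) /\
  dI p q r a b c u (posp u) = 0 /\ dI p q r a b c u (negp u) = 0.

Definition condC1 (b : Z -> R) : Prop :=
  (exists b0, 0 < b0 /\ forall n, b0 <= b n) /\
  (forall M, exists N : Z, forall n, (N < Z.abs n)%Z -> M < b n).

Definition condC2 (c : Z -> R) : Prop :=
  (exists c0, 0 < c0 /\ forall n, c n <= c0) /\ exZ c.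

(* Main.v *)
Require Import Defs.
From Stdlib Require Import Reals ZArith Lra Lia ClassicalEpsilon FunctionalExtensionality.
From Coquelicot Require Import Coquelicot.
Open Scope R_scope.

Lemma sumS (g : nat -> R) n : sum_n g (S n) = sum_n g n + g (S n).
Proof. rewrite sum_Sn. reflexivity. Qed.

Lemma sum_nonneg (g : nat -> R) n : (forall i, 0 <= g i) -> 0 <= sum_n g n.
Proof. intros H; induction n. rewrite sum_O; auto. rewrite sumS; specialize (H (S n)); lra. Qed.

Lemma sum_mono_n (g : nat -> R) n m : (forall i, 0 <= g i) -> (n <= m)%nat -> sum_n g n <= sum_n g m.
Proof. intros H Hnm; induction Hnm. lra. rewrite sumS; specialize (H (S m)); lra. Qed.

Lemma sum_le_fun (f g : nat -> R) n : (forall i, f i <= g i) -> sum_n f n <= sum_n g n.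
Proof. intros H; induction n. rewrite !sum_O; auto. rewrite !sumS; specialize (H (S n)); lra. Qed.

Lemma sum_ext_n (f g : nat -> R) n : (forall i, f i = g i) -> sum_n f n = sum_n g n.
Proof. intros H; induction n. rewrite !sum_O; auto. rewrite !sumS, IHn, H; auto. Qed.

Lemma sum_plus_n (f g : nat -> R) n : sum_n (fun i => f i + g i) n = sum_n f n + sum_n g n.
Proof. induction n. rewrite !sum_O; auto. rewrite !sumS, IHn; lra. Qed.

Lemma sum_scal_n (f : nat -> R) x n : sum_n (fun i => x * f i) n = x * sum_n f n.
Proof. induction n. rewrite !sum_O; auto. rewrite !sumS, IHn; lra. Qed.

Lemma series_lim (g : nat -> R) : ex_series g -> is_lim_seq (sum_n g) (Series g).
Proof. intros H. apply Series_correct in H. exact H. Qed.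

Lemma series_nonneg_bounded (g : nat -> R) M :
  (forall i, 0 <= g i) -> (forall N, sum_n g N <= M) -> ex_series g /\ Series g <= M.
Proof.
  intros H0 HM.
  assert (Hex : ex_finite_lim_seq (sum_n g)).
  { apply ex_finite_lim_seq_incr with M; auto. intros n; rewrite sumS; specialize (H0 (S n)); lra. }
  destruct Hex as [l Hl].
  assert (ex_series g) by (exists l; exact Hl).
  split; auto.
  pose proof (series_lim g H) as HL.
  assert (Hc := is_lim_seq_le (sum_n g) (fun _ => M) (Series g) M HM HL (is_lim_seq_const M)).
  simpl in Hc; auto.
Qed.

Lemma series_ge_partial (g : nat -> R) N :
  (forall i, 0 <= g i) -> ex_series g -> sum_n g N <= Series g.
Proof.
  intros H0 Hex.
  pose proof (series_lim g Hex) as HL.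
  apply is_lim_seq_incr_n with (N := N) in HL.
  assert (Hc := is_lim_seq_le (fun _ => sum_n g N) (fun n => sum_n g (n + N)) (sum_n g N) (Series g)
     (fun n => sum_mono_n g N (n+N) H0 ltac:(lia)) (is_lim_seq_const _) HL).
  simpl in Hc; auto.
Qed.

Lemma series_nonneg (g : nat -> R) : (forall i, 0 <= g i) -> ex_series g -> 0 <= Series g.
Proof. intros H0 Hex. pose proof (series_ge_partial g 0 H0 Hex). rewrite sum_O in H. specialize (H0 0%nat); lra. Qed.

Lemma sum_diff_bound (f g : nat -> R) N M : (forall i, Rabs (f i) <= g i) -> (N <= M)%nat ->
  Rabs (sum_n f M - sum_n f N) <= sum_n g M - sum_n g N.
Proof.
  intros H HNM; induction HNM.
  replace (sum_n f N - sum_n f N) with 0 by ring. rewrite Rabs_R0; lra.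
  rewrite !sumS. specialize (H (S m)).
  replace (sum_n f m + f (S m) - sum_n f N) with ((sum_n f m - sum_n f N) + f (S m)) by ring.
  eapply Rle_trans. apply Rabs_triang. lra.
Qed.

Lemma series_dom (f g : nat -> R) : (forall i, Rabs (f i) <= g i) -> ex_series g ->
  ex_series f /\ forall N, Rabs (Series f - sum_n f N) <= Series g - sum_n g N.
Proof.
  intros H Hg.
  assert (Hf : ex_series f).
  { apply ex_series_Rabs. apply (@ex_series_le R_AbsRing R_CompleteNormedModule (fun n => Rabs (f n)) g); auto. intros n.
    change (norm (Rabs (f n))) with (Rabs (Rabs (f n))). rewrite Rabs_Rabsolu. auto. }
  split; auto. intros N.
  pose proof (series_lim f Hf) as Lf. pose proof (series_lim g Hg) as Lg.
  apply is_lim_seq_incr_n with (N := N) in Lf. apply is_lim_seq_incr_n with (N := N) in Lg.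
  assert (L1 := is_lim_seq_abs _ _ (is_lim_seq_minus' _ _ _ _ Lf (is_lim_seq_const (sum_n f N)))).
  assert (L2 := is_lim_seq_minus' _ _ _ _ Lg (is_lim_seq_const (sum_n g N))).
  assert (Hc := is_lim_seq_le _ _ _ _ (fun n => sum_diff_bound f g N (n+N) H ltac:(lia)) L1 L2).
  simpl in Hc; auto.
Qed.

Lemma series_tail_small (g : nat -> R) : ex_series g -> forall eps, 0 < eps ->
  exists N, forall N', (N <= N')%nat -> Rabs (Series g - sum_n g N') < eps.
Proof.
  intros Hg eps Heps. pose proof (series_lim g Hg) as L.
  apply is_lim_seq_spec in L. destruct (L (mkposreal eps Heps)) as [N HN].
  exists N; intros N' HN'. specialize (HN N' HN'). simpl in HN. rewrite Rabs_minus_sym; auto.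
Qed.

Lemma lim_sum_n (h : nat -> nat -> R) (l : nat -> R) N :
  (forall i, is_lim_seq (fun j => h j i) (l i)) -> is_lim_seq (fun j => sum_n (h j) N) (sum_n l N).
Proof.
  intros H; induction N as [|N IHN].
  - rewrite sum_O. apply is_lim_seq_ext with (fun j => h j 0%nat). intros; symmetry; apply sum_O. auto.
  - assert (E : sum_n l (S N) = sum_n l N + l (S N)) by apply sumS.
    rewrite E. apply is_lim_seq_ext with (fun j => sum_n (h j) N + h j (S N)).
    intros; symmetry; apply sumS.
    apply is_lim_seq_plus'; auto.
Qed.

Definition Fp (f : Z -> R) : nat -> R := fun n => f (Z.of_nat n).
Definition Fm (f : Z -> R) : nat -> R := fun n => f (- Z.of_nat (S n))%Z.
Definition WZ (f : Z -> R) (N : nat) : R := sum_n (Fp f) N + sum_n (Fm f) N.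

Lemma exZ_iff f : exZ f <-> ex_series (Fp f) /\ ex_series (Fm f).
Proof. reflexivity. Qed.
Lemma sumZ_eq f : sumZ f = Series (Fp f) + Series (Fm f).
Proof. reflexivity. Qed.

Lemma Z_cases (n : Z) : (exists i : nat, n = Z.of_nat i) \/ (exists i : nat, n = (- Z.of_nat (S i))%Z).
Proof.
  destruct (Z_le_gt_dec 0 n).
  - left; exists (Z.to_nat n); lia.
  - right; exists (Z.to_nat (- n - 1)); lia.
Qed.

Lemma WZ_lim f : exZ f -> is_lim_seq (WZ f) (sumZ f).
Proof. intros [H1 H2]. unfold WZ, sumZ. apply is_lim_seq_plus'; apply series_lim; auto. Qed.

Lemma exZ_ext f g : (forall n, f n = g n) -> exZ f -> exZ g.
Proof. intros H [H1 H2]; split.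
  apply ex_series_ext with (fun n : nat => f (Z.of_nat n)); auto.
  apply ex_series_ext with (fun n : nat => f (- Z.of_nat (S n))%Z); auto. Qed.

Lemma sumZ_ext f g : (forall n, f n = g n) -> sumZ f = sumZ g.
Proof. intros H; unfold sumZ; f_equal; apply Series_ext; intros; auto. Qed.

Lemma exZ_plus f g : exZ f -> exZ g -> exZ (fun n => f n + g n).
Proof. intros [H1 H2] [H3 H4]; split; apply (ex_series_plus _ _ H1 H3) || apply (ex_series_plus _ _ H2 H4). Qed.

Lemma sumZ_plus f g : exZ f -> exZ g -> sumZ (fun n => f n + g n) = sumZ f + sumZ g.
Proof. intros [H1 H2] [H3 H4]. unfold sumZ. rewrite (Series_plus _ _ H1 H3), (Series_plus _ _ H2 H4). ring. Qed.

Lemma exZ_scal x f : exZ f -> exZ (fun n => x * f n).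
Proof. intros [H1 H2]; split; apply (ex_series_scal_l x _ H1) || apply (ex_series_scal_l x _ H2). Qed.

Lemma sumZ_scal x f : sumZ (fun n => x * f n) = x * sumZ f.
Proof. unfold sumZ. rewrite (Series_scal_l x (fun n => f (Z.of_nat n))), (Series_scal_l x (fun n => f (- Z.of_nat (S n))%Z)). ring. Qed.

Lemma exZ_minus f g : exZ f -> exZ g -> exZ (fun n => f n - g n).
Proof. intros Hf Hg. apply exZ_ext with (fun n => f n + (-1) * g n). intros; ring.
  apply exZ_plus; auto. apply exZ_scal; auto. Qed.

Lemma sumZ_minus f g : exZ f -> exZ g -> sumZ (fun n => f n - g n) = sumZ f - sumZ g.
Proof. intros Hf Hg. rewrite (sumZ_ext _ (fun n => f n + (-1) * g n)). rewrite sumZ_plus, sumZ_scal; auto. ring.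
  apply exZ_scal; auto. intros; ring. Qed.

Lemma exZ_dom f g : (forall n, Rabs (f n) <= g n) -> exZ g -> exZ f.
Proof. intros H [H1 H2]; split.
  apply (series_dom (Fp f) (Fp g)); auto. intros; apply H.
  apply (series_dom (Fm f) (Fm g)); auto. intros; apply H. Qed.

Lemma exZ_abs f : exZ (fun n => Rabs (f n)) -> exZ f.
Proof. intros; eapply exZ_dom; eauto. intros; simpl; lra. Qed.

Lemma exZ_le f g : (forall n, 0 <= f n <= g n) -> exZ g -> exZ f.
Proof. intros H; apply exZ_dom. intros n; destruct (H n); rewrite Rabs_right; lra. Qed.

Lemma sumZ_le f g : (forall n, f n <= g n) -> exZ f -> exZ g -> sumZ f <= sumZ g.
Proof.
  intros H Hf Hg.
  assert (Hc := is_lim_seq_le _ _ _ _ (fun N => Rplus_le_compat _ _ _ _ (sum_le_fun (Fp f) (Fp g) N (fun i => H _)) (sum_le_fun (Fm f) (Fm g) N (fun i => H _))) (WZ_lim f Hf) (WZ_lim g Hg)).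
  simpl in Hc; auto.
Qed.

Lemma WZ_nonneg f N : (forall n, 0 <= f n) -> 0 <= WZ f N.
Proof. intros H; unfold WZ; pose proof (sum_nonneg (Fp f) N (fun i => H _)); pose proof (sum_nonneg (Fm f) N (fun i => H _)); lra. Qed.

Lemma sumZ_nonneg f : (forall n, 0 <= f n) -> exZ f -> 0 <= sumZ f.
Proof. intros H [H1 H2]; unfold sumZ; pose proof (series_nonneg (Fp f) (fun i => H _) H1); pose proof (series_nonneg (Fm f) (fun i => H _) H2); unfold Fp, Fm in *; lra. Qed.

Lemma WZ_le_sumZ f N : (forall n, 0 <= f n) -> exZ f -> WZ f N <= sumZ f.
Proof. intros H [H1 H2]; unfold WZ, sumZ; pose proof (series_ge_partial (Fp f) N (fun i => H _) H1); pose proof (series_ge_partial (Fm f) N (fun i => H _) H2); unfold Fp, Fm in *; lra. Qed.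

Lemma exZ_bounded f M : (forall n, 0 <= f n) -> (forall N, WZ f N <= M) -> exZ f /\ sumZ f <= M.
Proof.
  intros H HM.
  assert (A1 : forall N, sum_n (Fp f) N <= M).
  { intros N; specialize (HM N); unfold WZ in HM; pose proof (sum_nonneg (Fm f) N (fun i => H _)); lra. }
  assert (A2 : forall N, sum_n (Fm f) N <= M).
  { intros N; specialize (HM N); unfold WZ in HM; pose proof (sum_nonneg (Fp f) N (fun i => H _)); lra. }
  destruct (series_nonneg_bounded _ _ (fun i => H _) A1) as [E1 _].
  destruct (series_nonneg_bounded _ _ (fun i => H _) A2) as [E2 _].
  assert (exZ f) by (split; auto). split; auto.
  assert (Hc := is_lim_seq_le _ _ _ _ HM (WZ_lim f H0) (is_lim_seq_const M)). simpl in Hc; auto.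
Qed.

Lemma sumZ_pos f n0 : (forall n, 0 <= f n) -> exZ f -> 0 < f n0 -> 0 < sumZ f.
Proof.
  intros H Hf Hn0.
  destruct (Z_cases n0) as [[i ->]|[i ->]].
  - pose proof (WZ_le_sumZ f i H Hf). unfold WZ in H0.
    assert (Fp f i <= sum_n (Fp f) i).
    { destruct i. rewrite sum_O; lra. rewrite sumS. pose proof (sum_nonneg (Fp f) i (fun j => H _)). unfold Fp in *. lra. }
    pose proof (sum_nonneg (Fm f) i (fun j => H _)). unfold Fp, Fm in *. lra.
  - pose proof (WZ_le_sumZ f i H Hf). unfold WZ in H0.
    assert (Fm f i <= sum_n (Fm f) i).
    { destruct i. rewrite sum_O; lra. rewrite sumS. pose proof (sum_nonneg (Fm f) i (fun j => H _)). unfold Fm in *. lra. }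
    pose proof (sum_nonneg (Fp f) i (fun j => H _)). unfold Fp, Fm in *. lra.
Qed.

Lemma sumZ_dom_tail f g : (forall n, Rabs (f n) <= g n) -> exZ g -> forall N,
  Rabs (sumZ f - WZ f N) <= sumZ g - WZ g N.
Proof.
  intros H [H1 H2] N.
  destruct (series_dom (Fp f) (Fp g) (fun i => H _) H1) as [_ B1].
  destruct (series_dom (Fm f) (Fm g) (fun i => H _) H2) as [_ B2].
  specialize (B1 N); specialize (B2 N). unfold sumZ, WZ.
  replace (Series (fun n : nat => f (Z.of_nat n)) + Series (fun n : nat => f (- Z.of_nat (S n))%Z) -
   (sum_n (Fp f) N + sum_n (Fm f) N)) with ((Series (Fp f) - sum_n (Fp f) N) + (Series (Fm f) - sum_n (Fm f) N)) by (unfold Fp, Fm; ring).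
  eapply Rle_trans. apply Rabs_triang. unfold Fp, Fm in *. lra.
Qed.

Lemma sumZ_tail_small g : exZ g -> forall eps, 0 < eps -> exists N, Rabs (sumZ g - WZ g N) < eps.
Proof.
  intros [H1 H2] eps Heps.
  destruct (series_tail_small _ H1 (eps/2) ltac:(lra)) as [N1 HN1].
  destruct (series_tail_small _ H2 (eps/2) ltac:(lra)) as [N2 HN2].
  exists (Nat.max N1 N2). specialize (HN1 (Nat.max N1 N2) ltac:(lia)). specialize (HN2 (Nat.max N1 N2) ltac:(lia)).
  unfold sumZ, WZ.
  replace (Series (fun n : nat => g (Z.of_nat n)) + Series (fun n : nat => g (- Z.of_nat (S n))%Z) -
   (sum_n (Fp g) (Nat.max N1 N2) + sum_n (Fm g) (Nat.max N1 N2))) with ((Series (Fp g) - sum_n (Fp g) (Nat.max N1 N2)) + (Series (Fm g) - sum_n (Fm g) (Nat.max N1 N2))) by (unfold Fp, Fm; ring).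
  eapply Rle_lt_trans. apply Rabs_triang. unfold Fp, Fm in *. lra.
Qed.

Lemma WZ_lim_pointwise (f : nat -> Z -> R) (g : Z -> R) N :
  (forall n, is_lim_seq (fun j => f j n) (g n)) -> is_lim_seq (fun j => WZ (f j) N) (WZ g N).
Proof.
  intros H. unfold WZ. apply is_lim_seq_plus'.
  apply (lim_sum_n (fun j i => Fp (f j) i) (Fp g)). intros; apply H.
  apply (lim_sum_n (fun j i => Fm (f j) i) (Fm g)). intros; apply H.
Qed.

Lemma fatouZ (f : nat -> Z -> R) (g : Z -> R) (K : nat -> R) (Kl : R) :
  (forall j n, 0 <= f j n) -> (forall n, is_lim_seq (fun j => f j n) (g n)) ->
  (forall j, exZ (f j)) -> (forall j, sumZ (f j) <= K j) -> is_lim_seq K Kl ->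
  exZ g /\ sumZ g <= Kl.
Proof.
  intros H0 Hl Hex HK HKl.
  assert (Hg0 : forall n, 0 <= g n).
  { intros n. assert (Hc := is_lim_seq_le (fun _ => 0) _ 0 (g n) (fun j => H0 j n) (is_lim_seq_const 0) (Hl n)). simpl in Hc; auto. }
  apply exZ_bounded; auto. intros N.
  assert (Hc := is_lim_seq_le _ _ _ _ (fun j => Rle_trans _ _ _ (WZ_le_sumZ (f j) N (H0 j) (Hex j)) (HK j)) (WZ_lim_pointwise f g N Hl) HKl).
  simpl in Hc; auto.
Qed.

Lemma dctZ (f : nat -> Z -> R) (g G : Z -> R) :
  (forall j n, Rabs (f j n) <= G n) -> exZ G -> (forall n, is_lim_seq (fun j => f j n) (g n)) ->
  is_lim_seq (fun j => sumZ (f j)) (sumZ g).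
Proof.
  intros HG HexG Hl.
  assert (Hg : forall n, Rabs (g n) <= G n).
  { intros n. assert (Hc := is_lim_seq_le _ (fun _ => G n) _ (G n) (fun j => HG j n) (is_lim_seq_abs _ _ (Hl n)) (is_lim_seq_const _)). simpl in Hc; auto. }
  apply is_lim_seq_spec. intros eps.
  destruct (sumZ_tail_small G HexG (eps/3) ltac:(destruct eps; simpl; lra)) as [N HN].
  pose proof (WZ_lim_pointwise f g N Hl) as L. apply is_lim_seq_spec in L.
  assert (He3 : 0 < eps / 3) by (destruct eps; simpl; lra).
  destruct (L (mkposreal _ He3)) as [J HJ]. exists J. intros j Hj. specialize (HJ j Hj). simpl in HJ.
  pose proof (sumZ_dom_tail (f j) G (HG j) HexG N) as T1.
  pose proof (sumZ_dom_tail g G Hg HexG N) as T2.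
  pose proof (Rle_abs (sumZ G - WZ G N)).
  replace (sumZ (f j) - sumZ g) with ((sumZ (f j) - WZ (f j) N) + (WZ (f j) N - WZ g N) - (sumZ g - WZ g N)) by ring.
  pose proof (Rabs_triang ((sumZ (f j) - WZ (f j) N) + (WZ (f j) N - WZ g N)) (- (sumZ g - WZ g N))).
  pose proof (Rabs_triang (sumZ (f j) - WZ (f j) N) (WZ (f j) N - WZ g N)).
  rewrite Rabs_Ropp in H0. unfold Rminus at 1. lra.
Qed.

Lemma term_le_sumZ f n0 : (forall n, 0 <= f n) -> exZ f -> f n0 <= sumZ f.
Proof.
  intros H Hf.
  destruct (Z_cases n0) as [[i ->]|[i ->]].
  - pose proof (WZ_le_sumZ f i H Hf). unfold WZ in H0.
    assert (Fp f i <= sum_n (Fp f) i).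
    { destruct i. rewrite sum_O; lra. rewrite sumS. pose proof (sum_nonneg (Fp f) i (fun j => H _)). unfold Fp in *. lra. }
    pose proof (sum_nonneg (Fm f) i (fun j => H _)). unfold Fp, Fm in *. lra.
  - pose proof (WZ_le_sumZ f i H Hf). unfold WZ in H0.
    assert (Fm f i <= sum_n (Fm f) i).
    { destruct i. rewrite sum_O; lra. rewrite sumS. pose proof (sum_nonneg (Fm f) i (fun j => H _)). unfold Fm in *. lra. }
    pose proof (sum_nonneg (Fp f) i (fun j => H _)). unfold Fp, Fm in *. lra.
Qed.

Lemma sumZ_zero f : (forall n, f n = 0) -> sumZ f = 0.
Proof.
  intros H. unfold sumZ. rewrite (Series_ext _ (fun _ => 0)), (Series_ext (fun n => f (- Z.of_nat (S n))%Z) (fun _ => 0)) by auto.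
  rewrite (Series_ext (fun _ : nat => 0) (fun n => 0 * 0)) by (intros; ring). rewrite Series_scal_l. ring.
Qed.



Lemma finite_supp_nat (g : nat -> R) N : (forall i, (N < i)%nat -> g i = 0) -> ex_series g /\ Series g = sum_n g N.
Proof.
  intros H.
  assert (Hs : is_series g (sum_n g N)).
  { change (is_lim_seq (sum_n g) (sum_n g N)). apply is_lim_seq_ext_loc with (fun _ => sum_n g N).
    exists N. intros M HM. induction HM. auto. rewrite sumS, H by lia. rewrite Rplus_0_r. exact IHHM.
    apply is_lim_seq_const. }
  split. exists (sum_n g N); auto. apply is_series_unique; auto.
Qed.

Lemma finite_supp f N : (forall n, (n < - Z.of_nat (S N) \/ Z.of_nat N < n)%Z -> f n = 0) -> exZ f /\ sumZ f = WZ f N.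
Proof.
  intros H.
  destruct (finite_supp_nat (Fp f) N) as [E1 S1]. { intros i Hi; unfold Fp; apply H; lia. }
  destruct (finite_supp_nat (Fm f) N) as [E2 S2]. { intros i Hi; unfold Fm; apply H; lia. }
  split. split; auto. unfold sumZ, WZ. unfold Fp, Fm in *. rewrite S1, S2. auto.
Qed.

Lemma small_inv (eps : R) : 0 < eps -> exists N : nat, forall j, (N <= j)%nat -> / (INR j + 1) < eps.
Proof.
  intros He. destruct (archimed (/ eps)) as [H1 _].
  exists (Z.to_nat (up (/ eps))). intros j Hj.
  assert (IZR (up (/eps)) <= INR j).
  { apply le_INR in Hj. rewrite INR_IZR_INZ in Hj. rewrite Z2Nat.id in Hj. auto.
    apply le_IZR. pose proof (Rinv_0_lt_compat eps He). lra. }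
  assert (0 < INR j + 1) by (pose proof (pos_INR j); lra).
  assert (/eps < INR j + 1) by lra.
  pose proof (Rinv_0_lt_compat eps He).
  replace eps with (/ / eps) by (field; lra). apply Rinv_lt_contravar; auto.
  apply Rmult_lt_0_compat; auto.
Qed.

Lemma step_cluster (Q : R -> nat -> nat -> Prop) (y : nat -> R) (Rb : R) :
  (forall eps k0, 0 < eps -> exists k, Q eps k0 k) ->
  (forall eps eps' k0 k0' k, Q eps k0 k -> eps <= eps' -> (k0' <= k0)%nat -> Q eps' k0' k) ->
  (forall k, Rabs (y k) <= Rb) ->
  exists Y, forall eps k0, 0 < eps -> exists k, Q eps k0 k /\ Rabs (y k - Y) < eps.
Proof.
  intros Hne Hmono Hb.
  assert (Hpos : forall j : nat, 0 < / (INR j + 1)).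
  { intros j; apply Rinv_0_lt_compat; pose proof (pos_INR j); lra. }
  set (g := fun j => proj1_sig (constructive_indefinite_description _ (Hne (/ (INR j + 1)) j (Hpos j)))).
  assert (Hg : forall j, Q (/ (INR j + 1)) j (g j)).
  { intros j. unfold g. destruct (constructive_indefinite_description _ _); simpl; auto. }
  destruct (Bolzano_Weierstrass (fun j => y (g j)) (fun z => -Rb <= z <= Rb) (compact_P3 _ _)) as [l Hl].
  { intros n; specialize (Hb (g n)); apply Rabs_le_between in Hb; auto. }
  exists l. intros eps k0 He.
  destruct (small_inv eps He) as [N HN].
  destruct (Hl (fun z => Rabs (z - l) < eps) (Nat.max N k0)) as [j [Hj Hv]].
  { exists (mkposreal eps He). intros z Hz. unfold disc in Hz. simpl in Hz. auto. }
  exists (g j). split; auto. apply Hmono with (/ (INR j + 1)) j; auto.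
  left; apply HN; lia. lia.
Qed.

Section Compact.
Variable x : nat -> Z -> R.
Variable Rb : R.
Hypothesis Hx : forall k n, Rabs (x k n) <= Rb.

Definition Pw (N : nat) (u : Z -> R) : Prop :=
  forall eps k0, 0 < eps -> exists k, (k0 <= k)%nat /\
    forall n, (Z.abs n <= Z.of_nat N)%Z -> Rabs (x k n - u n) < eps.

Lemma base_ex : exists u, Pw 0 u.
Proof.
  destruct (step_cluster (fun eps k0 k => (k0 <= k)%nat) (fun k => x k 0%Z) Rb) as [Y HY].
  - intros eps k0 _; exists k0; lia.
  - intros; lia.
  - intros; apply Hx.
  - exists (fun _ => Y). intros eps k0 He. destruct (HY eps k0 He) as [k [Hk Hk2]].
    exists k; split; auto. intros n Hn. assert (n = 0%Z) by lia. subst; auto.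
Qed.

Lemma ext_ex N u : Pw N u -> exists u', Pw (S N) u' /\ forall n, (Z.abs n <= Z.of_nat N)%Z -> u' n = u n.
Proof.
  intros HP.
  set (Q1 := fun eps k0 k => (k0 <= k)%nat /\ forall n, (Z.abs n <= Z.of_nat N)%Z -> Rabs (x k n - u n) < eps).
  destruct (step_cluster Q1 (fun k => x k (Z.of_nat (S N))) Rb) as [Y1 HY1].
  - intros eps k0 He; destruct (HP eps k0 He) as [k Hk]; exists k; exact Hk.
  - intros eps eps' k0 k0' k [H1 H2] H3 H4; split. lia. intros n Hn; specialize (H2 n Hn); lra.
  - intros; apply Hx.
  - set (Q2 := fun eps k0 k => Q1 eps k0 k /\ Rabs (x k (Z.of_nat (S N)) - Y1) < eps).
    destruct (step_cluster Q2 (fun k => x k (- Z.of_nat (S N))%Z) Rb) as [Y2 HY2].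
    + intros eps k0 He; destruct (HY1 eps k0 He) as [k Hk]; exists k; exact Hk.
    + intros eps eps' k0 k0' k [[H1 H2] H5] H3 H4; split. split. lia. intros n Hn; specialize (H2 n Hn); lra. lra.
    + intros; apply Hx.
    + exists (fun n => if Z.eq_dec n (Z.of_nat (S N)) then Y1 else if Z.eq_dec n (- Z.of_nat (S N))%Z then Y2 else u n).
      split.
      * intros eps k0 He. destruct (HY2 eps k0 He) as [k [[[Hk1 Hk2] Hk3] Hk4]].
        exists k; split; auto. intros n Hn.
        destruct (Z.eq_dec n (Z.of_nat (S N))). subst; auto.
        destruct (Z.eq_dec n (- Z.of_nat (S N))%Z). subst; auto.
        apply Hk2. rewrite Nat2Z.inj_succ in *. lia.
      * intros n Hn. destruct (Z.eq_dec n (Z.of_nat (S N))). rewrite Nat2Z.inj_succ in *; lia.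
        destruct (Z.eq_dec n (- Z.of_nat (S N))%Z). rewrite Nat2Z.inj_succ in *; lia. auto.
Qed.

Definition base_s : {u | Pw 0 u} := constructive_indefinite_description _ base_ex.
Definition ext_s N (s : {u | Pw N u}) : {u' | Pw (S N) u' /\ forall n, (Z.abs n <= Z.of_nat N)%Z -> u' n = proj1_sig s n} :=
  constructive_indefinite_description _ (ext_ex N (proj1_sig s) (proj2_sig s)).

Fixpoint build (N : nat) : {u | Pw N u} :=
  match N with
  | O => base_s
  | S M => let e := ext_s M (build M) in exist _ (proj1_sig e) (proj1 (proj2_sig e))
  end.

Lemma build_consistent N M : (N <= M)%nat -> forall n, (Z.abs n <= Z.of_nat N)%Z ->
  proj1_sig (build M) n = proj1_sig (build N) n.
Proof.
  intros H; induction H; intros n Hn; auto.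
  change (proj1_sig (ext_s m (build m)) n = proj1_sig (build N) n).
  destruct (ext_s m (build m)) as [u' [H1 H2]]; simpl. rewrite H2. apply IHle; auto. lia.
Qed.

Definition ulim (n : Z) : R := proj1_sig (build (Z.to_nat (Z.abs n))) n.

Lemma ulim_window N : Pw N ulim.
Proof.
  intros eps k0 He. destruct (proj2_sig (build N) eps k0 He) as [k [Hk1 Hk2]].
  exists k; split; auto. intros n Hn. unfold ulim.
  rewrite <- (build_consistent (Z.to_nat (Z.abs n)) N). apply Hk2; auto. lia. lia.
Qed.

Lemma subseq_exists : exists (u : Z -> R) (phi : nat -> nat), (forall j, (j <= phi j)%nat) /\
  forall n, is_lim_seq (fun j => x (phi j) n) (u n).
Proof.
  assert (Hpos : forall j : nat, 0 < / (INR j + 1)).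
  { intros j; apply Rinv_0_lt_compat; pose proof (pos_INR j); lra. }
  set (phi := fun j => proj1_sig (constructive_indefinite_description _ (ulim_window j (/ (INR j + 1)) j (Hpos j)))).
  assert (Hphi : forall j, (j <= phi j)%nat /\ forall n, (Z.abs n <= Z.of_nat j)%Z -> Rabs (x (phi j) n - ulim n) < / (INR j + 1)).
  { intros j. unfold phi. destruct (constructive_indefinite_description _ _); simpl; auto. }
  exists ulim, phi. split. intros j; apply Hphi.
  intros n. apply is_lim_seq_spec. intros eps.
  destruct (small_inv eps (cond_pos eps)) as [N HN].
  exists (Nat.max N (Z.to_nat (Z.abs n))). intros j Hj.
  destruct (Hphi j) as [_ H2]. eapply Rlt_trans. apply H2. lia. apply HN. lia.
Qed.
End Compact.

Lemma ln_lt_self y : 0 < y -> ln y < y.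
Proof.
  intros Hy. destruct (Req_dec (ln y) 0) as [E|E].
  - rewrite E; auto.
  - pose proof (exp_ineq1 (ln y) E). rewrite exp_ln in H; auto. lra.
Qed.

Lemma rpow_0 y : rpow 0 y = 0.
Proof. unfold rpow. destruct (Req_EM_T 0 0); auto. congruence. Qed.

Lemma rpow_abs0 y : rpow (Rabs 0) y = 0.
Proof. rewrite Rabs_R0; apply rpow_0. Qed.

Lemma rpow_pos x y : 0 < x -> rpow x y = Rpower x y.
Proof. intros H. unfold rpow. destruct (Req_EM_T x 0); auto. lra. Qed.

Lemma rpow_nonneg x y : 0 <= rpow x y.
Proof. unfold rpow. destruct (Req_EM_T x 0). lra. unfold Rpower. left; apply exp_pos. Qed.

Lemma Rpower_pos x y : 0 < Rpower x y.
Proof. unfold Rpower; apply exp_pos. Qed.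

Lemma pow_even x k : x ^ (2 * k) = (x ^ 2) ^ k.
Proof. rewrite pow_mult. auto. Qed.

Lemma pow_even_nonneg x k : 0 <= x ^ (2 * k).
Proof. rewrite pow_even. apply pow_le. nra. Qed.

Lemma pow_even_abs x k : x ^ (2 * k) = Rabs x ^ (2 * k).
Proof. rewrite !pow_even. f_equal. rewrite <- !Rsqr_pow2. apply Rsqr_abs. Qed.

Lemma pow_odd x k : (1 <= k)%nat -> x ^ (2 * k - 1) = x * (x ^ 2) ^ (k - 1).
Proof. intros Hk. replace (2 * k - 1)%nat with (S (2 * (k - 1))) by lia. rewrite <- tech_pow_Rmult. rewrite pow_even. auto. Qed.

Lemma pow_odd_neg x k : (1 <= k)%nat -> (- x) ^ (2 * k - 1) = - x ^ (2 * k - 1).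
Proof. intros Hk. rewrite !pow_odd; auto. replace ((- x) ^ 2) with (x ^ 2) by ring. ring. Qed.

Lemma pow_even_neg x k : (- x) ^ (2 * k) = x ^ (2 * k).
Proof. rewrite !pow_even. f_equal. ring. Qed.

Lemma pow_odd_mul x k : (1 <= k)%nat -> x ^ (2 * k - 1) * x = x ^ (2 * k).
Proof. intros Hk. replace (2 * k)%nat with (S (2 * k - 1)) at 2 by lia. simpl. ring. Qed.

Lemma pow_even_mono x y k : Rabs x <= Rabs y -> x ^ (2 * k) <= y ^ (2 * k).
Proof. intros H. rewrite (pow_even_abs x), (pow_even_abs y). apply pow_incr. split; auto. apply Rabs_pos. Qed.

Lemma rpow_p (k : nat) x : rpow (Rabs x) (INR (2 * k)) = x ^ (2 * k) \/ (x = 0 /\ k = 0%nat).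
Proof.
  destruct (Req_dec x 0) as [E|E].
  - subst. rewrite rpow_abs0. destruct k. right; auto. left. rewrite pow_i; auto. lia.
  - left. rewrite rpow_pos by (apply Rabs_pos_lt; auto). rewrite Rpower_pow by (apply Rabs_pos_lt; auto).
    symmetry; apply pow_even_abs.
Qed.

Lemma rpow_p' (k : nat) x : (1 <= k)%nat -> rpow (Rabs x) (INR (2 * k)) = x ^ (2 * k).
Proof. intros Hk. destruct (rpow_p k x) as [H|[_ H]]; auto. lia. Qed.

Lemma rpow_pm2 (k : nat) x : (1 <= k)%nat -> rpow (Rabs x) (INR (2 * k) - 2) * x = x ^ (2 * k - 1).
Proof.
  intros Hk. destruct (Req_dec x 0) as [E|E].
  - subst. rewrite rpow_abs0. rewrite pow_i by lia. ring.
  - rewrite rpow_pos by (apply Rabs_pos_lt; auto).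
    replace (INR (2 * k) - 2) with (INR (2 * (k - 1))).
    2:{ rewrite !mult_INR, minus_INR by lia. simpl. ring. }
    rewrite Rpower_pow by (apply Rabs_pos_lt; auto). rewrite <- pow_even_abs.
    rewrite pow_odd by auto. rewrite pow_even. ring.
Qed.

Lemma rpow_q2 q x : rpow (Rabs x) (q - 2) * x * x = rpow (Rabs x) q.
Proof.
  destruct (Req_dec x 0) as [E|E].
  - subst. rewrite !rpow_abs0. ring.
  - assert (Hx : 0 < Rabs x) by (apply Rabs_pos_lt; auto).
    rewrite !rpow_pos by auto.
    rewrite Rmult_assoc. replace (x * x) with (Rpower (Rabs x) 2).
    + rewrite <- Rpower_plus. f_equal; ring.
    + replace 2 with (INR 2) by (simpl; ring). rewrite Rpower_pow by auto. simpl.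
      rewrite Rmult_1_r. rewrite <- Rabs_mult. apply Rabs_right. nra.
Qed.

Lemma lnabs_eq r x : x <> 0 -> lnabs r x = r * ln (Rabs x).
Proof.
  intros E. unfold lnabs. rewrite rpow_pos by (apply Rabs_pos_lt; auto). unfold Rpower. rewrite ln_exp. auto.
Qed.

Lemma lnabs_0 r : lnabs r 0 = 0.
Proof. unfold lnabs. rewrite rpow_abs0. unfold ln. destruct (Rlt_dec _ _) as [h|h]; [exfalso; apply (Rlt_irrefl 0 h)|reflexivity]. Qed.

Section Scalar.
Variables q r : R.
Hypothesis Hq : 2 <= q.
Hypothesis Hr : 0 <= r.

Definition hB x := rpow (Rabs x) q.
Definition hL x := rpow (Rabs x) q * lnabs r x.

Lemma hB_0 : hB 0 = 0.
Proof. unfold hB; apply rpow_abs0. Qed.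
Lemma hL_0 : hL 0 = 0.
Proof. unfold hL; rewrite rpow_abs0; ring. Qed.

Lemma hB_nonneg x : 0 <= hB x.
Proof. apply rpow_nonneg. Qed.

Lemma hB_opp x : hB (- x) = hB x.
Proof. unfold hB; rewrite Rabs_Ropp; auto. Qed.
Lemma hL_opp x : hL (- x) = hL x.
Proof. unfold hL, lnabs; rewrite Rabs_Ropp; auto. Qed.

Lemma hB_nz x : x <> 0 -> hB x = exp (q * ln (Rabs x)).
Proof. intros E; unfold hB; rewrite rpow_pos by (apply Rabs_pos_lt; auto); auto. Qed.
Lemma hL_nz x : x <> 0 -> hL x = exp (q * ln (Rabs x)) * (r * ln (Rabs x)).
Proof. intros E; unfold hL; rewrite lnabs_eq by auto; rewrite rpow_pos by (apply Rabs_pos_lt; auto); auto. Qed.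

Lemma hB_mono x y : Rabs x <= Rabs y -> hB x <= hB y.
Proof.
  intros H. destruct (Req_dec x 0) as [E|E].
  - subst; rewrite hB_0; apply hB_nonneg.
  - assert (0 < Rabs x) by (apply Rabs_pos_lt; auto).
    unfold hB. rewrite !rpow_pos by lra. apply Rle_Rpower_l; lra.
Qed.

Lemma hB_strict x y : x <> 0 -> Rabs x < Rabs y -> hB x < hB y.
Proof.
  intros E H. assert (0 < Rabs x) by (apply Rabs_pos_lt; auto).
  unfold hB. rewrite !rpow_pos by lra. unfold Rpower. apply exp_increasing.
  apply Rmult_lt_compat_l. lra. apply ln_increasing; lra.
Qed.

Lemma hB_pos x : x <> 0 -> 0 < hB x.
Proof. intros E; rewrite hB_nz; auto; apply exp_pos. Qed.

Lemma Rpower_le1 y e : 0 < y <= 1 -> 0 <= e -> Rpower y e <= 1.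
Proof.
  intros [H1 H2] He. unfold Rpower. rewrite <- exp_0.
  assert (ln y <= 0). { rewrite <- ln_1. apply ln_le; lra. }
  destruct (Req_dec (e * ln y) 0) as [E|E]. rewrite E; lra.
  left; apply exp_increasing. assert (e * ln y <= 0) by nra. lra.
Qed.

Lemma hB_small x : Rabs x <= 1 -> hB x <= Rabs x.
Proof.
  intros H. destruct (Req_dec x 0) as [E|E].
  - subst; rewrite hB_0, Rabs_R0; lra.
  - assert (0 < Rabs x) by (apply Rabs_pos_lt; auto).
    unfold hB. rewrite rpow_pos by auto.
    replace q with (1 + (q - 1)) by ring. rewrite Rpower_plus, Rpower_1 by auto.
    pose proof (Rpower_le1 (Rabs x) (q - 1) ltac:(lra) ltac:(lra)). nra.
Qed.

Lemma hL_small x : Rabs x <= 1 -> Rabs (hL x) <= r * Rabs x /\ hL x <= 0.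
Proof.
  intros H. destruct (Req_dec x 0) as [E|E].
  - subst; rewrite hL_0, !Rabs_R0; lra.
  - assert (Hx : 0 < Rabs x) by (apply Rabs_pos_lt; auto).
    rewrite hL_nz by auto.
    assert (Hl : ln (Rabs x) <= 0). { rewrite <- ln_1. apply ln_le; lra. }
    assert (Hl2 : - ln (Rabs x) < / Rabs x). { rewrite <- ln_Rinv by auto. apply ln_lt_self. apply Rinv_0_lt_compat; auto. }
    replace (exp (q * ln (Rabs x))) with (Rpower (Rabs x) q) by auto.
    replace q with (1 + (1 + (q - 2))) by ring. rewrite !Rpower_plus, Rpower_1 by auto.
    pose proof (Rpower_le1 (Rabs x) (q - 2) ltac:(lra) ltac:(lra)).
    pose proof (Rpower_pos (Rabs x) (q - 2)).
    assert (Rabs x * - ln (Rabs x) <= 1).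
    { apply Rmult_lt_compat_l with (r := Rabs x) in Hl2; auto. rewrite Rinv_r in Hl2; lra. }
    set (X := Rabs x) in *. set (Y := Rpower X (q - 2)) in *. set (l := ln X) in *.
    assert (E2 : X * (X * Y) * (r * l) = - (r * X * (Y * (X * - l)))) by ring.
    rewrite E2.
    assert (0 <= X * - l) by nra.
    assert (0 <= Y * (X * - l)) by nra.
    assert (Y * (X * - l) <= 1) by (replace 1 with (1 * 1) by ring; apply Rmult_le_compat; lra).
    assert (0 <= r * X) by nra.
    assert (r * X * (Y * (X * - l)) <= r * X) by (rewrite <- (Rmult_1_r (r * X)) at 2; apply Rmult_le_compat_l; lra).
    assert (0 <= r * X * (Y * (X * - l))) by nra.
    rewrite Rabs_Ropp, Rabs_right by lra. split; lra.
Qed.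

Lemma hB_bound x R : 1 <= R -> Rabs x <= R -> hB x <= Rpower R q.
Proof.
  intros HR Hx. destruct (Req_dec x 0) as [E|E].
  - subst; rewrite hB_0. left; apply Rpower_pos.
  - assert (0 < Rabs x) by (apply Rabs_pos_lt; auto).
    unfold hB. rewrite rpow_pos by auto. apply Rle_Rpower_l; lra.
Qed.

Lemma hL_bound x R : 1 <= R -> Rabs x <= R -> Rabs (hL x) <= r + r * Rpower R q * R.
Proof.
  intros HR Hx. pose proof (Rpower_pos R q).
  destruct (Rle_dec (Rabs x) 1).
  - destruct (hL_small x r0). assert (0 <= r * Rpower R q * R) by (apply Rmult_le_pos; [apply Rmult_le_pos|]; lra). nra.
  - assert (Hx1 : 1 < Rabs x) by lra. assert (x <> 0) by (intro; subst; rewrite Rabs_R0 in Hx1; lra).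
    pose proof (hB_bound x R HR Hx). rewrite hL_nz by auto.
    replace (exp (q * ln (Rabs x))) with (hB x) by (rewrite hB_nz; auto).
    assert (0 <= ln (Rabs x)) by (rewrite <- ln_1; apply ln_le; lra).
    pose proof (ln_lt_self (Rabs x) ltac:(lra)).
    pose proof (hB_nonneg x).
    rewrite Rabs_right by (apply Rle_ge; apply Rmult_le_pos; [lra|apply Rmult_le_pos; lra]).
    assert (hB x * ln (Rabs x) <= Rpower R q * R) by (apply Rmult_le_compat; lra).
    nra.
Qed.

Lemma hB_scale s x : 0 < s -> hB (s * x) = Rpower s q * hB x.
Proof.
  intros Hs. destruct (Req_dec x 0) as [E|E].
  - subst. rewrite Rmult_0_r, hB_0. ring.
  - assert (s * x <> 0) by (apply Rmult_integral_contrapositive; split; lra).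
    rewrite !hB_nz by auto. rewrite Rabs_mult, Rabs_right by lra.
    rewrite ln_mult by (try apply Rabs_pos_lt; auto). unfold Rpower. rewrite <- exp_plus. f_equal; ring.
Qed.

Lemma hL_scale s x : 0 < s -> hL (s * x) = Rpower s q * (hL x + r * ln s * hB x).
Proof.
  intros Hs. destruct (Req_dec x 0) as [E|E].
  - subst. rewrite Rmult_0_r, hL_0, hB_0. ring.
  - assert (s * x <> 0) by (apply Rmult_integral_contrapositive; split; lra).
    rewrite !hL_nz, hB_nz by auto. rewrite Rabs_mult, Rabs_right by lra.
    rewrite ln_mult by (try apply Rabs_pos_lt; auto). unfold Rpower.
    replace (q * (ln s + ln (Rabs x))) with (q * ln s + q * ln (Rabs x)) by ring. rewrite exp_plus. ring.
Qed.

Lemma cont_exp x : continuity_pt exp x.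
Proof. apply derivable_continuous_pt, derivable_pt_exp. Qed.
Lemma cont_ln x : 0 < x -> continuity_pt ln x.
Proof. intros H. apply derivable_continuous_pt. exists (/ x). apply derivable_pt_lim_ln; auto. Qed.

Lemma lim_nz (u : nat -> R) (l : R) : l <> 0 -> is_lim_seq u l -> eventually (fun j => u j <> 0).
Proof.
  intros E H. apply is_lim_seq_spec in H. assert (He : 0 < Rabs l) by (apply Rabs_pos_lt; auto).
  destruct (H (mkposreal _ He)) as [N HN]. exists N. intros j Hj Hu. specialize (HN j Hj). simpl in HN.
  rewrite Hu in HN. rewrite Rminus_0_l, Rabs_Ropp in HN. lra.
Qed.

Lemma lim_ln_abs (u : nat -> R) (l : R) : l <> 0 -> is_lim_seq u l -> is_lim_seq (fun j => ln (Rabs (u j))) (ln (Rabs l)).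
Proof.
  intros E H. apply (is_lim_seq_continuous ln (fun j => Rabs (u j))). apply cont_ln. apply Rabs_pos_lt; auto.
  apply (is_lim_seq_abs _ _ H).
Qed.

Lemma lim_zero_dom (u v : nat -> R) C : 0 <= C -> is_lim_seq u 0 -> (forall j, Rabs (u j) <= 1 -> Rabs (v j) <= C * Rabs (u j)) -> is_lim_seq v 0.
Proof.
  intros HC Hu Hv. apply is_lim_seq_spec in Hu. apply is_lim_seq_spec. intros eps.
  assert (He : 0 < Rmin 1 (eps / (C + 1))). { apply Rmin_pos. lra. apply Rdiv_lt_0_compat. destruct eps; simpl; lra. lra. }
  destruct (Hu (mkposreal _ He)) as [N HN]. exists N. intros j Hj. specialize (HN j Hj). simpl in HN.
  rewrite Rminus_0_r in *. pose proof (Rmin_l 1 (eps / (C + 1))). pose proof (Rmin_r 1 (eps / (C + 1))).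
  specialize (Hv j ltac:(lra)).
  assert (C * Rabs (u j) <= C * (eps / (C + 1))) by (apply Rmult_le_compat_l; lra).
  assert (C * (eps / (C + 1)) < eps).
  { destruct eps as [e He']; simpl. apply Rmult_lt_reg_r with (C + 1). lra. field_simplify; lra. }
  lra.
Qed.

Lemma lim_hB (u : nat -> R) (l : R) : is_lim_seq u l -> is_lim_seq (fun j => hB (u j)) (hB l).
Proof.
  intros H. destruct (Req_dec l 0) as [E|E].
  - subst. rewrite hB_0. apply lim_zero_dom with u 1. lra. auto.
    intros j Hj. pose proof (hB_small (u j) Hj). rewrite Rabs_right by (apply Rle_ge, hB_nonneg). lra.
  - rewrite hB_nz by auto. apply is_lim_seq_ext_loc with (fun j => exp (q * ln (Rabs (u j)))).
    + destruct (lim_nz u l E H) as [N HN]. exists N. intros j Hj. rewrite hB_nz; auto.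
    + apply (is_lim_seq_continuous exp (fun j => q * ln (Rabs (u j)))). apply cont_exp.
      apply (is_lim_seq_scal_l _ q (ln (Rabs l))). apply lim_ln_abs; auto.
Qed.

Lemma lim_hL (u : nat -> R) (l : R) : is_lim_seq u l -> is_lim_seq (fun j => hL (u j)) (hL l).
Proof.
  intros H. destruct (Req_dec l 0) as [E|E].
  - subst. rewrite hL_0. apply lim_zero_dom with u r. lra. auto.
    intros j Hj. apply (hL_small (u j) Hj).
  - rewrite hL_nz by auto. apply is_lim_seq_ext_loc with (fun j => exp (q * ln (Rabs (u j))) * (r * ln (Rabs (u j)))).
    + destruct (lim_nz u l E H) as [N HN]. exists N. intros j Hj. rewrite hL_nz; auto.
    + apply is_lim_seq_mult'.
      apply (is_lim_seq_continuous exp (fun j => q * ln (Rabs (u j)))). apply cont_exp.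
      apply (is_lim_seq_scal_l _ q (ln (Rabs l))). apply lim_ln_abs; auto.
      apply (is_lim_seq_scal_l _ r (ln (Rabs l))). apply lim_ln_abs; auto.
Qed.

End Scalar.

Lemma lim_pow (u : nat -> R) (l : R) n : is_lim_seq u l -> is_lim_seq (fun j => u j ^ n) (l ^ n).
Proof. intros H. apply (is_lim_seq_continuous (fun y => y ^ n)); auto. apply derivable_continuous_pt, derivable_pt_pow. Qed.

Lemma Rmax0_eq x : Rmax x 0 = (x + Rabs x) / 2.
Proof. unfold Rmax, Rabs. destruct (Rle_dec x 0), (Rcase_abs x); lra. Qed.
Lemma Rmin0_eq x : Rmin x 0 = (x - Rabs x) / 2.
Proof. unfold Rmin, Rabs. destruct (Rle_dec x 0), (Rcase_abs x); lra. Qed.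

Lemma lim_max0 (u : nat -> R) (l : R) : is_lim_seq u l -> is_lim_seq (fun j => Rmax (u j) 0) (Rmax l 0).
Proof.
  intros H. rewrite Rmax0_eq. apply is_lim_seq_ext with (fun j => / 2 * (u j + Rabs (u j))).
  intros; rewrite Rmax0_eq; field. replace ((l + Rabs l) / 2) with (/2 * (l + Rabs l)) by field.
  apply (is_lim_seq_scal_l _ (/2) (l + Rabs l)). apply is_lim_seq_plus'; auto. apply (is_lim_seq_abs _ _ H).
Qed.
Lemma lim_min0 (u : nat -> R) (l : R) : is_lim_seq u l -> is_lim_seq (fun j => Rmin (u j) 0) (Rmin l 0).
Proof.
  intros H. rewrite Rmin0_eq. apply is_lim_seq_ext with (fun j => / 2 * (u j - Rabs (u j))).
  intros; rewrite Rmin0_eq; field. replace ((l - Rabs l) / 2) with (/2 * (l - Rabs l)) by field.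
  apply (is_lim_seq_scal_l _ (/2) (l - Rabs l)). apply is_lim_seq_minus'; auto. apply (is_lim_seq_abs _ _ H).
Qed.

Lemma odd_mono (k : nat) x y : (1 <= k)%nat -> x <= y -> x ^ (2 * k - 1) <= y ^ (2 * k - 1).
Proof.
  intros Hk H.
  destruct (Rle_dec 0 x) as [r1|r1].
  - apply pow_incr; lra.
  - destruct (Rle_dec 0 y) as [r0|r0].
    + assert (x ^ (2*k-1) <= 0). { replace x with (- (-x)) by ring. rewrite pow_odd_neg by auto. pose proof (pow_le (-x) (2*k-1) ltac:(lra)). lra. }
      pose proof (pow_le y (2*k-1) r0). lra.
    + assert ((-y)^(2*k-1) <= (-x)^(2*k-1)) by (apply pow_incr; lra).
      rewrite !pow_odd_neg in H0 by auto. lra.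
Qed.

Lemma odd_sign (k : nat) x : (1 <= k)%nat -> (0 <= x -> 0 <= x ^ (2*k-1)) /\ (x <= 0 -> x ^ (2*k-1) <= 0).
Proof.
  intros Hk. split; intros H.
  - apply pow_le; auto.
  - pose proof (odd_mono k x 0 Hk H). rewrite pow_i in H0 by lia. auto.
Qed.

Lemma betw (k : nat) s y z : (1 <= k)%nat -> 0 <= s <= 1 -> ((0 <= y /\ 0 <= z) \/ (y <= 0 /\ z <= 0)) ->
  (s * y + z) ^ (2*k-1) * y <= (y + z) ^ (2*k-1) * y /\ (s * y + z) ^ (2*k-1) * z <= (y + z) ^ (2*k-1) * z.
Proof.
  intros Hk Hs [[H1 H2]|[H1 H2]].
  - assert (s * y + z <= y + z) by nra.
    pose proof (odd_mono k _ _ Hk H). split; apply Rmult_le_compat_r; auto.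
  - assert (y + z <= s * y + z) by nra.
    pose proof (odd_mono k _ _ Hk H). split; apply Rmult_le_compat_neg_l' || nra.
    all: nra.
Qed.

Lemma posneg_sign (al be : R) :
  (0 <= Rmax be 0 - Rmax al 0 /\ 0 <= Rmin be 0 - Rmin al 0) \/ (Rmax be 0 - Rmax al 0 <= 0 /\ Rmin be 0 - Rmin al 0 <= 0).
Proof.
  unfold Rmax, Rmin. destruct (Rle_dec al be); [left|right];
  destruct (Rle_dec al 0), (Rle_dec be 0); lra.
Qed.

Lemma max_min_sum x : Rmax x 0 + Rmin x 0 = x.
Proof. unfold Rmax, Rmin; destruct (Rle_dec x 0); lra. Qed.

Lemma max_lip x y : Rabs (Rmax y 0 - Rmax x 0) <= Rabs (y - x).
Proof. unfold Rmax, Rabs. destruct (Rle_dec x 0), (Rle_dec y 0), (Rcase_abs (y - x)); try destruct (Rcase_abs (0 - 0)); try destruct (Rcase_abs (y - 0)); try destruct (Rcase_abs (0 - x)); lra. Qed.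
Lemma min_lip x y : Rabs (Rmin y 0 - Rmin x 0) <= Rabs (y - x).
Proof. unfold Rmin, Rabs. destruct (Rle_dec x 0), (Rle_dec y 0), (Rcase_abs (y - x)); try destruct (Rcase_abs (0 - 0)); try destruct (Rcase_abs (y - x)); try destruct (Rcase_abs (0 - x)); try destruct (Rcase_abs (y - 0)); lra. Qed.

Lemma abs_sy_z s y z : 0 <= s <= 1 -> ((0 <= y /\ 0 <= z) \/ (y <= 0 /\ z <= 0)) -> Rabs (s * y + z) <= Rabs (y + z).
Proof.
  intros Hs [[H1 H2]|[H1 H2]].
  - rewrite !Rabs_right by nra. nra.
  - rewrite !Rabs_left1 by nra. nra.
Qed.

Lemma oddprod_bound (k : nat) x y : (1 <= k)%nat -> 0 <= x * y -> Rabs y <= Rabs x ->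
  0 <= x ^ (2*k-1) * y <= x ^ (2*k).
Proof.
  intros Hk H1 H2. rewrite pow_odd by auto. rewrite pow_even.
  replace ((x^2)^k) with (x^2 * (x^2)^(k-1)).
  2:{ rewrite tech_pow_Rmult. f_equal. lia. }
  assert (0 <= (x ^ 2) ^ (k - 1)) by (apply pow_le; nra).
  assert (x * y <= x ^ 2).
  { rewrite <- (Rabs_right (x*y)) by lra. rewrite Rabs_mult. replace (x^2) with (Rabs x * Rabs x).
    apply Rmult_le_compat_l; auto. apply Rabs_pos. rewrite <- Rabs_mult. rewrite Rabs_right by nra. ring. }
  split; nra.
Qed.

Lemma max_prod x : 0 <= x * Rmax x 0 /\ Rabs (Rmax x 0) <= Rabs x.
Proof. unfold Rmax. destruct (Rle_dec x 0). rewrite Rabs_R0; split; [nra|apply Rabs_pos]. split; [nra|lra]. Qed.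
Lemma min_prod x : 0 <= x * Rmin x 0 /\ Rabs (Rmin x 0) <= Rabs x.
Proof. unfold Rmin. destruct (Rle_dec x 0). split; [nra|lra]. rewrite Rabs_R0; split; [nra|apply Rabs_pos]. Qed.
Ltac prodpos := first [ (right; ring) | apply Rle_0_sqr | apply Rmult_le_pos; lra | (rewrite <- Rmult_opp_opp; apply Rmult_le_pos; lra) | nra ].

Lemma dmax_prod x y : 0 <= (y - x) * (Rmax y 0 - Rmax x 0).
Proof. unfold Rmax. destruct (Rle_dec x 0) as [h1|h1], (Rle_dec y 0) as [h2|h2]; try apply Rnot_le_lt in h1; try apply Rnot_le_lt in h2; prodpos. Qed.
Lemma dmin_prod x y : 0 <= (y - x) * (Rmin y 0 - Rmin x 0).
Proof. unfold Rmin. destruct (Rle_dec x 0) as [h1|h1], (Rle_dec y 0) as [h2|h2]; try apply Rnot_le_lt in h1; try apply Rnot_le_lt in h2; prodpos. Qed.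

Lemma nz_iff (u : Z -> R) : u <> (fun _ => 0) <-> exists n, u n <> 0.
Proof.
  split.
  - intros H. apply NNPP. intros H2. apply H. apply functional_extensionality. intros n.
    apply NNPP. intros H3. apply H2. exists n; auto.
  - intros [n Hn] E. rewrite E in Hn. apply Hn; auto.
Qed.


Lemma lim_cm (x : nat -> R) (l C : R) : is_lim_seq x l -> is_lim_seq (fun j => C * x j) (C * l).
Proof. intros H. apply is_lim_seq_mult'; auto. apply is_lim_seq_const. Qed.

Lemma lim_inv2 : is_lim_seq (fun j => / (INR j + 2)) 0.
Proof.
  apply is_lim_seq_spec. intros eps. destruct (small_inv eps (cond_pos eps)) as [N HN].
  exists N. intros j Hj. specialize (HN j Hj). rewrite Rminus_0_r.
  assert (0 < INR j + 1) by (pose proof (pos_INR j); lra).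
  rewrite Rabs_right by (apply Rle_ge; left; apply Rinv_0_lt_compat; lra).
  eapply Rle_lt_trans; [|apply HN]. apply Rinv_le_contravar; lra.
Qed.

Lemma cont_pick (q r L S B : R) (m : nat) : S < L ->
  exists s, 0 < s < 1 /\ s ^ m * S <= Rpower s q * (L + r * ln s * B).
Proof.
  intros HSL.
  set (sj := fun j : nat => 1 - / (INR j + 2)).
  assert (Hs : is_lim_seq sj 1).
  { unfold sj. assert (H := is_lim_seq_minus' _ _ 1 0 (is_lim_seq_const 1) lim_inv2). rewrite Rminus_0_r in H. exact H. }
  assert (Hsr : forall j, 0 < sj j < 1).
  { intros j. unfold sj. assert (0 < INR j + 1) by (pose proof (pos_INR j); lra).
    assert (0 < / (INR j + 2)) by (apply Rinv_0_lt_compat; lra).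
    assert (/ (INR j + 2) < 1) by (rewrite <- Rinv_1; apply Rinv_lt_contravar; lra). lra. }
  assert (Hg : is_lim_seq (fun j => Rpower (sj j) q * (L + r * ln (sj j) * B) - sj j ^ m * S) (Rpower 1 q * (L + r * ln 1 * B) - 1 ^ m * S)).
  { apply is_lim_seq_minus'. apply is_lim_seq_mult'.
    - apply (is_lim_seq_continuous (fun s => Rpower s q)); auto. apply derivable_continuous_pt.
      exists (q * Rpower 1 (q - 1)). apply derivable_pt_lim_power. lra.
    - apply is_lim_seq_plus'. apply is_lim_seq_const. apply is_lim_seq_mult'; [|apply is_lim_seq_const].
      apply lim_cm. apply (is_lim_seq_continuous ln); auto. apply cont_ln. lra.
    - apply is_lim_seq_mult'; [|apply is_lim_seq_const]. apply lim_pow; auto. }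
  rewrite ln_1, pow1 in Hg. unfold Rpower in Hg. rewrite ln_1, Rmult_0_r, exp_0 in Hg.
  apply is_lim_seq_spec in Hg. assert (He : 0 < L - S) by lra.
  destruct (Hg (mkposreal _ He)) as [N HN]. specialize (HN N (Nat.le_refl _)). simpl in HN.
  exists (sj N). split; auto. apply Rabs_lt_between in HN. unfold Rpower. lra.
Qed.


Lemma mul_div_cancel x y : y <> 0 -> y * (x / y) = x.
Proof. intros H. field. auto. Qed.

Lemma glb_ex (E : R -> Prop) : (exists y, E y) -> (forall y, E y -> 0 <= y) ->
  exists m, 0 <= m /\ (forall y, E y -> m <= y) /\ forall eps, 0 < eps -> exists y, E y /\ y < m + eps.
Proof.
  intros [y0 Hy0] Hpos.
  destruct (completeness (fun x => E (- x))) as [l [Hub Hlub]].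
  - exists 0. intros x Hx. specialize (Hpos _ Hx). lra.
  - exists (- y0). rewrite Ropp_involutive. auto.
  - exists (- l). split; [|split].
    + assert (l <= 0). { apply Hlub. intros x Hx. specialize (Hpos _ Hx). lra. } lra.
    + intros y Hy. assert (- y <= l). { apply Hub. rewrite Ropp_involutive; auto. } lra.
    + intros eps He. apply NNPP. intros Hno.
      assert (l <= l - eps).
      { apply Hlub. intros x Hx. apply Rnot_lt_le. intros Hlt. apply Hno. exists (- x). split; auto. lra. }
      lra.
Qed.

Lemma lim_inv1 : is_lim_seq (fun j => / (INR j + 1)) 0.
Proof.
  apply is_lim_seq_spec. intros eps. destruct (small_inv eps (cond_pos eps)) as [N HN].
  exists N. intros j Hj. specialize (HN j Hj). rewrite Rminus_0_r.
  assert (0 < INR j + 1) by (pose proof (pos_INR j); lra).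
  rewrite Rabs_right by (apply Rle_ge; left; apply Rinv_0_lt_compat; lra). auto.
Qed.

Section Main.
Variables (p q r : R) (a b c : Z -> R) (k : nat) (b0 : R).
Hypothesis Hk : (1 <= k)%nat.
Hypothesis Hpk : p = INR (2 * k).
Hypothesis Hpq : p < q.
Hypothesis Hr : 1 <= r.
Hypothesis Ha : forall n, 0 < a n.
Hypothesis Hb : forall n, 0 < b n.
Hypothesis Hc : forall n, 0 < c n.
Hypothesis Hb0 : 0 < b0.
Hypothesis Hbb : forall n, b0 <= b n.
Hypothesis Hcs : exZ c.

Lemma Hp2 : 2 <= p.
Proof. rewrite Hpk, mult_INR. simpl. apply le_INR in Hk. simpl in Hk. lra. Qed.
Lemma Hq2 : 2 <= q.
Proof. pose proof Hp2; lra. Qed.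
Lemma Hr0 : 0 <= r.
Proof. lra. Qed.

Definition PP := (2 * k)%nat.
Definition Aterm (u : Z -> R) n := a n * Defs.Delta u n ^ PP + b n * u n ^ PP.
Definition SPterm (u : Z -> R) n := a n * Defs.Delta u n ^ (PP - 1) * Defs.Delta (posp u) n + b n * u n ^ (PP - 1) * posp u n.
Definition SMterm (u : Z -> R) n := a n * Defs.Delta u n ^ (PP - 1) * Defs.Delta (negp u) n + b n * u n ^ (PP - 1) * negp u n.
Definition Bterm (u : Z -> R) n := c n * hB q (u n).
Definition Lterm (u : Z -> R) n := c n * hL q r (u n).
Definition AA u := sumZ (Aterm u).
Definition SP u := sumZ (SPterm u).
Definition SM u := sumZ (SMterm u).
Definition BB u := sumZ (Bterm u).
Definition LL u := sumZ (Lterm u).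
Definition alpha := 1 / p - 1 / q.
Definition beta := r / q ^ 2.
Definition J u := alpha * AA u + beta * BB u.
Definition inEx u := exZ (Aterm u).

Lemma alpha_pos : 0 < alpha.
Proof. unfold alpha. pose proof Hp2. apply Rlt_Rminus. unfold Rdiv. rewrite !Rmult_1_l. apply Rinv_lt_contravar; nra. Qed.
Lemma beta_pos : 0 < beta.
Proof. unfold beta. pose proof Hq2. apply Rdiv_lt_0_compat; nra. Qed.

Lemma Aterm_nonneg u n : 0 <= Aterm u n.
Proof. unfold Aterm, PP. pose proof (Ha n); pose proof (Hb n).
  pose proof (pow_even_nonneg (Defs.Delta u n) k); pose proof (pow_even_nonneg (u n) k). nra. Qed.

Lemma AA_nonneg u : inEx u -> 0 <= AA u.
Proof. intros H; apply sumZ_nonneg; auto; apply Aterm_nonneg. Qed.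

Lemma u_bound u : inEx u -> forall n, Rabs (u n) <= Rmax 1 (AA u / b0).
Proof.
  intros H n. pose proof (term_le_sumZ (Aterm u) n (Aterm_nonneg u) H) as T. fold (AA u) in T.
  unfold Aterm, PP in T. pose proof (Ha n). pose proof (pow_even_nonneg (Defs.Delta u n) k).
  pose proof (pow_even_nonneg (u n) k). pose proof (Hbb n).
  assert (b0 * u n ^ (2 * k) <= AA u) by nra.
  destruct (Rle_dec (Rabs (u n)) 1). apply Rle_trans with 1; auto; apply Rmax_l.
  apply Rle_trans with (AA u / b0); [|apply Rmax_r].
  apply Rle_trans with (u n ^ (2*k)).
  - rewrite pow_even_abs. rewrite <- (pow_1 (Rabs (u n))) at 1. apply Rle_pow. lra. lia.
  - apply Rmult_le_reg_l with b0; auto. replace (b0 * (AA u / b0)) with (AA u) by (field; lra). lra.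
Qed.

Definition CL (R0 : R) := r + r * Rpower R0 q * R0.

Lemma bounded_terms u R0 : 1 <= R0 -> (forall n, Rabs (u n) <= R0) ->
  (forall n, Rabs (Bterm u n) <= c n * Rpower R0 q) /\ (forall n, Rabs (Lterm u n) <= c n * CL R0).
Proof.
  intros H1 H2. split; intros n; unfold Bterm, Lterm; rewrite Rabs_mult, (Rabs_right (c n)) by (apply Rle_ge; left; apply Hc).
  - apply Rmult_le_compat_l. left; apply Hc. rewrite Rabs_right by (apply Rle_ge, hB_nonneg).
    apply hB_bound; auto. apply Hq2.
  - apply Rmult_le_compat_l. left; apply Hc. apply hL_bound; auto. apply Hq2. apply Hr0.
Qed.

Lemma exZ_c_scal x : exZ (fun n => c n * x).
Proof. apply exZ_ext with (fun n => x * c n). intros; ring. apply exZ_scal; auto. Qed.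

Lemma bounded_ex u R0 : 1 <= R0 -> (forall n, Rabs (u n) <= R0) ->
  exZ (Bterm u) /\ exZ (Lterm u) /\ exZ (fun n => Rabs (Lterm u n)).
Proof.
  intros H1 H2. destruct (bounded_terms u R0 H1 H2) as [B1 B2].
  split; [|split].
  - apply exZ_dom with (fun n => c n * Rpower R0 q); auto. apply exZ_c_scal.
  - apply exZ_dom with (fun n => c n * CL R0); auto. apply exZ_c_scal.
  - apply exZ_dom with (fun n => c n * CL R0); auto. intros; rewrite Rabs_Rabsolu; auto. apply exZ_c_scal.
Qed.

Lemma inEx_ex u : inEx u -> exZ (Bterm u) /\ exZ (Lterm u) /\ exZ (fun n => Rabs (Lterm u n)).
Proof.
  intros H. apply (bounded_ex u (Rmax 1 (AA u / b0))). apply Rmax_l. apply u_bound; auto.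
Qed.

Lemma posp_bound u n : Rabs (posp u n) <= Rabs (u n).
Proof. unfold posp. apply max_prod. Qed.
Lemma negp_bound u n : Rabs (negp u n) <= Rabs (u n).
Proof. unfold negp. apply min_prod. Qed.

Lemma inEx_ex_pm u : inEx u -> exZ (Bterm (posp u)) /\ exZ (Lterm (posp u)) /\ exZ (Bterm (negp u)) /\ exZ (Lterm (negp u)).
Proof.
  intros H. pose proof (u_bound u H) as Hu. set (R0 := Rmax 1 (AA u / b0)) in *.
  assert (1 <= R0) by apply Rmax_l.
  destruct (bounded_ex (posp u) R0 H0) as [? [? ?]]. intros n; eapply Rle_trans; [apply posp_bound|auto].
  destruct (bounded_ex (negp u) R0 H0) as [? [? ?]]. intros n; eapply Rle_trans; [apply negp_bound|auto].
  auto.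
Qed.

Lemma BB_nonneg u : inEx u -> 0 <= BB u.
Proof. intros H. apply sumZ_nonneg. intros n; unfold Bterm. pose proof (Hc n); pose proof (hB_nonneg q (u n)); nra.
  apply inEx_ex; auto. Qed.

Lemma J_nonneg u : inEx u -> 0 <= J u.
Proof. intros H. unfold J. pose proof alpha_pos; pose proof beta_pos; pose proof (AA_nonneg u H); pose proof (BB_nonneg u H). nra. Qed.

Lemma SPterm_bound u n : 0 <= SPterm u n <= Aterm u n.
Proof.
  unfold SPterm, Aterm, PP, posp, Defs.Delta. pose proof (Ha n); pose proof (Hb n).
  pose proof (oddprod_bound k (u (n+1)%Z - u n) (Rmax (u (n+1)%Z) 0 - Rmax (u n) 0) Hk (dmax_prod _ _) (max_lip _ _)).
  destruct (max_prod (u n)) as [G1 G2]. pose proof (oddprod_bound k (u n) (Rmax (u n) 0) Hk G1 G2).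
  split; nra.
Qed.
Lemma SMterm_bound u n : 0 <= SMterm u n <= Aterm u n.
Proof.
  unfold SMterm, Aterm, PP, negp, Defs.Delta. pose proof (Ha n); pose proof (Hb n).
  pose proof (oddprod_bound k (u (n+1)%Z - u n) (Rmin (u (n+1)%Z) 0 - Rmin (u n) 0) Hk (dmin_prod _ _) (min_lip _ _)).
  destruct (min_prod (u n)) as [G1 G2]. pose proof (oddprod_bound k (u n) (Rmin (u n) 0) Hk G1 G2).
  split; nra.
Qed.

Lemma SP_ex u : inEx u -> exZ (SPterm u).
Proof. intros H; apply exZ_le with (Aterm u); auto; apply SPterm_bound. Qed.
Lemma SM_ex u : inEx u -> exZ (SMterm u).
Proof. intros H; apply exZ_le with (Aterm u); auto; apply SMterm_bound. Qed.

Lemma Aterm_split u n : Aterm u n = SPterm u n + SMterm u n.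
Proof.
  unfold Aterm, SPterm, SMterm, posp, negp, Defs.Delta, PP.
  set (X := u (n+1)%Z). set (Y := u n).
  assert (E1 : (Rmax X 0 - Rmax Y 0) + (Rmin X 0 - Rmin Y 0) = X - Y) by (pose proof (max_min_sum X); pose proof (max_min_sum Y); lra).
  assert (E2 : Rmax Y 0 + Rmin Y 0 = Y) by apply max_min_sum.
  rewrite <- (pow_odd_mul (X - Y) k Hk), <- (pow_odd_mul Y k Hk).
  transitivity (a n * (X-Y)^(2*k-1) * ((Rmax X 0 - Rmax Y 0) + (Rmin X 0 - Rmin Y 0)) + b n * Y^(2*k-1) * (Rmax Y 0 + Rmin Y 0)).
  - rewrite E1, E2. ring.
  - ring.
Qed.

Lemma AA_split u : inEx u -> AA u = SP u + SM u.
Proof. intros H. unfold AA, SP, SM. rewrite <- sumZ_plus by (apply SP_ex || apply SM_ex; auto).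
  apply sumZ_ext; intros; apply Aterm_split. Qed.

Lemma hL_split x : hL q r x = hL q r (Rmax x 0) + hL q r (Rmin x 0).
Proof. unfold Rmax, Rmin. destruct (Rle_dec x 0). rewrite hL_0; ring. rewrite hL_0; ring. Qed.

Lemma LL_split u : inEx u -> LL u = LL (posp u) + LL (negp u).
Proof. intros H. destruct (inEx_ex_pm u H) as [_ [E1 [_ E2]]]. unfold LL. rewrite <- sumZ_plus by auto.
  apply sumZ_ext; intros; unfold Lterm, posp, negp. rewrite (hL_split (u n)). ring. Qed.


Lemma logterm_eq u n : logterm q r c u n = Lterm u n.
Proof. unfold logterm, Lterm, hL. ring. Qed.

Lemma normE_p_eq u n : normE_p p a b u n = Aterm u n.
Proof. unfold normE_p, Aterm, PP. rewrite Hpk, !rpow_p' by auto. auto. Qed.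

Lemma pm2_eq x y : rpow (Rabs x) (p - 2) * x * y = x ^ (PP - 1) * y.
Proof. rewrite Hpk, rpow_pm2 by auto. auto. Qed.

Lemma dI_uu u : dI p q r a b c u u = AA u - LL u.
Proof.
  unfold dI, AA, LL. f_equal; apply sumZ_ext; intros n.
  - unfold Aterm. rewrite !Rmult_assoc, <- (Rmult_assoc (rpow _ _) (Defs.Delta u n)), <- (Rmult_assoc (rpow _ (p-2)) (u n)).
    rewrite !pm2_eq. unfold PP. rewrite !pow_odd_mul by auto. auto.
  - unfold Lterm, hL. rewrite <- (rpow_q2 q (u n)). ring.
Qed.

Lemma dI_up u : dI p q r a b c u (posp u) = SP u - LL (posp u).
Proof.
  unfold dI, SP, LL. f_equal; apply sumZ_ext; intros n.
  - unfold SPterm. rewrite !Rmult_assoc, <- (Rmult_assoc (rpow _ _) (Defs.Delta u n)), <- (Rmult_assoc (rpow _ (p-2)) (u n)).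
    rewrite !pm2_eq. ring.
  - unfold Lterm, hL, posp. unfold Rmax. destruct (Rle_dec (u n) 0).
    + rewrite rpow_abs0. ring.
    + rewrite <- (rpow_q2 q (u n)). ring.
Qed.

Lemma dI_un u : dI p q r a b c u (negp u) = SM u - LL (negp u).
Proof.
  unfold dI, SM, LL. f_equal; apply sumZ_ext; intros n.
  - unfold SMterm. rewrite !Rmult_assoc, <- (Rmult_assoc (rpow _ _) (Defs.Delta u n)), <- (Rmult_assoc (rpow _ (p-2)) (u n)).
    rewrite !pm2_eq. ring.
  - unfold Lterm, hL, negp. unfold Rmin. destruct (Rle_dec (u n) 0).
    + rewrite <- (rpow_q2 q (u n)). ring.
    + rewrite rpow_abs0. ring.
Qed.

Lemma rpow_inv_p S : 0 <= S -> rpow (rpow S (1 / p)) p = S.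
Proof.
  intros H. destruct (Req_dec S 0) as [E|E].
  - subst. rewrite !rpow_0. auto.
  - rewrite (rpow_pos S) by lra. rewrite rpow_pos by apply Rpower_pos.
    rewrite Rpower_mult. replace (1 / p * p) with 1 by (pose proof Hp2; field; lra). apply Rpower_1; lra.
Qed.

Lemma inE_iff u : inE p a b u <-> inEx u.
Proof. unfold inE, inEx. split; apply exZ_ext; intros; rewrite normE_p_eq; auto. Qed.

Lemma Ifun_eq u : inEx u -> Ifun p q r a b c u = AA u / p + beta * BB u - LL u / q.
Proof.
  intros H. unfold Ifun, normE. rewrite rpow_inv_p.
  - rewrite (sumZ_ext (normE_p p a b u) (Aterm u)) by apply normE_p_eq.
    rewrite (sumZ_ext (logterm q r c u) (Lterm u)) by apply logterm_eq.
    unfold AA, BB, LL, beta, Bterm, hB. unfold Rdiv. ring.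
  - rewrite (sumZ_ext (normE_p p a b u) (Aterm u)) by apply normE_p_eq. apply AA_nonneg; auto.
Qed.

Lemma inD_iff u : inD p q r a b c u <-> inEx u.
Proof.
  unfold inD. rewrite inE_iff. split. tauto. intros H; split; auto.
  destruct (inEx_ex u H) as [_ [_ E]]. apply exZ_ext with (fun n => Rabs (Lterm u n)); auto.
  intros; rewrite logterm_eq; auto.
Qed.

Definition Mp u := inEx u /\ posp u <> (fun _ => 0) /\ negp u <> (fun _ => 0) /\ SP u <= LL (posp u) /\ SM u <= LL (negp u).
Definition Np u := inEx u /\ u <> (fun _ => 0) /\ AA u <= LL u.

Lemma Mset_to u : Mset p q r a b c u -> Mp u /\ Ifun p q r a b c u = J u.
Proof.
  intros [HD [H1 [H2 [H3 H4]]]]. rewrite inD_iff in HD. rewrite dI_up in H3. rewrite dI_un in H4.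
  split. unfold Mp. split; [auto|split; [auto|split; [auto|split; lra]]].
  rewrite Ifun_eq by auto. rewrite (AA_split u HD) at 1. rewrite (LL_split u HD). unfold J, alpha.
  rewrite (AA_split u HD). replace (SP u) with (LL (posp u)) by lra. replace (SM u) with (LL (negp u)) by lra.
  unfold Rdiv; ring.
Qed.

Lemma Mset_of u : Mp u -> SP u = LL (posp u) -> SM u = LL (negp u) -> Mset p q r a b c u /\ Ifun p q r a b c u = J u.
Proof.
  intros [HE [H1 [H2 _]]] E1 E2. assert (Mset p q r a b c u).
  { split. rewrite inD_iff; auto. split; auto. split; auto. rewrite dI_up, dI_un. split; lra. }
  split; auto. apply Mset_to; auto.
Qed.

Lemma Nset_to u : Nset p q r a b c u -> Np u /\ Ifun p q r a b c u = J u.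
Proof.
  intros [HD [H1 H2]]. rewrite inD_iff in HD. rewrite dI_uu in H2.
  split. unfold Np. split; [auto|split; [auto|lra]].
  rewrite Ifun_eq by auto. unfold J, alpha. replace (LL u) with (AA u) by lra. unfold Rdiv; ring.
Qed.

Lemma Nset_of u : Np u -> AA u = LL u -> Nset p q r a b c u /\ Ifun p q r a b c u = J u.
Proof.
  intros [HE [H1 _]] E. assert (Nset p q r a b c u).
  { split. rewrite inD_iff; auto. split; auto. rewrite dI_uu. lra. }
  split; auto. apply Nset_to; auto.
Qed.

Lemma Mp_Np u : Mp u -> Np u.
Proof.
  intros [HE [H1 [H2 [H3 H4]]]]. split; auto. split.
  - intros E. apply H1. apply functional_extensionality; intros n. unfold posp. rewrite E. unfold Rmax. destruct (Rle_dec 0 0); auto.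
  - rewrite AA_split, LL_split by auto. lra.
Qed.


Lemma exZ_0 : exZ (fun _ => 0).
Proof. apply exZ_ext with (fun n => 0 * c n). intros; ring. apply exZ_scal; auto. Qed.

Lemma bigpoint v : exZ (Lterm v) -> 0 < LL v -> exists n, 1 < Rabs (v n).
Proof.
  intros Hex Hpos. apply NNPP. intros Hno.
  assert (forall n, Lterm v n <= 0).
  { intros n. unfold Lterm. assert (Rabs (v n) <= 1). { apply Rnot_lt_le. intros H; apply Hno; exists n; auto. }
    destruct (hL_small q r Hq2 Hr0 (v n) H). pose proof (Hc n). nra. }
  pose proof (sumZ_le (Lterm v) (fun _ => 0) H Hex exZ_0). rewrite (sumZ_zero (fun _ => 0)) in H0 by (intros; reflexivity).
  unfold LL in Hpos. lra.
Qed.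

Lemma SPterm_ge u n : b n * u n ^ (PP - 1) * posp u n <= SPterm u n.
Proof.
  unfold SPterm, PP, posp, Defs.Delta. pose proof (Ha n).
  pose proof (oddprod_bound k (u (n+1)%Z - u n) (Rmax (u (n+1)%Z) 0 - Rmax (u n) 0) Hk (dmax_prod _ _) (max_lip _ _)).
  nra.
Qed.
Lemma SMterm_ge u n : b n * u n ^ (PP - 1) * negp u n <= SMterm u n.
Proof.
  unfold SMterm, PP, negp, Defs.Delta. pose proof (Ha n).
  pose proof (oddprod_bound k (u (n+1)%Z - u n) (Rmin (u (n+1)%Z) 0 - Rmin (u n) 0) Hk (dmin_prod _ _) (min_lip _ _)).
  nra.
Qed.
Lemma Aterm_ge u n : b n * u n ^ PP <= Aterm u n.
Proof. unfold Aterm, PP. pose proof (Ha n). pose proof (pow_even_nonneg (Defs.Delta u n) k). nra. Qed.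

Lemma powP_pos x : x <> 0 -> 0 < x ^ PP.
Proof. intros H. unfold PP. rewrite pow_even_abs. apply pow_lt. apply Rabs_pos_lt; auto. Qed.
Lemma powP_ge1 x : 1 <= Rabs x -> 1 <= x ^ PP.
Proof. intros H. unfold PP. rewrite pow_even_abs. apply pow_R1_Rle; auto. Qed.

Lemma LB_plus u : Mp u -> b0 <= LL (posp u).
Proof.
  intros [HE [H1 [H2 [H3 H4]]]]. destruct (inEx_ex_pm u HE) as [_ [EL _]].
  pose proof (SP_ex u HE) as ES.
  assert (Hpos : forall n, 0 <= SPterm u n) by (intros; apply SPterm_bound).
  apply nz_iff in H1. destruct H1 as [n0 Hn0].
  assert (Hu0 : 0 < u n0). { unfold posp, Rmax in Hn0. destruct (Rle_dec (u n0) 0). lra. lra. }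
  assert (0 < SP u).
  { apply Rlt_le_trans with (SPterm u n0); [|apply term_le_sumZ; auto].
    eapply Rlt_le_trans; [|apply SPterm_ge]. unfold posp. rewrite Rmax_left by lra.
    rewrite Rmult_assoc. unfold PP. rewrite pow_odd_mul by auto. apply Rmult_lt_0_compat. apply Hb.
    apply (powP_pos (u n0)); lra. }
  destruct (bigpoint (posp u) EL ltac:(lra)) as [m Hm].
  assert (Hum : 1 < u m). { unfold posp, Rmax in Hm. destruct (Rle_dec (u m) 0). rewrite Rabs_R0 in Hm; lra. rewrite Rabs_right in Hm; lra. }
  apply Rle_trans with (SP u); auto. apply Rle_trans with (SPterm u m); [|apply term_le_sumZ; auto].
  eapply Rle_trans; [|apply SPterm_ge]. unfold posp. rewrite Rmax_left by lra.
  rewrite Rmult_assoc. unfold PP. rewrite pow_odd_mul by auto.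
  pose proof (powP_ge1 (u m) ltac:(rewrite Rabs_right; lra)). unfold PP in H0. pose proof (Hbb m). pose proof (Hb m). nra.
Qed.

Lemma LB_minus u : Mp u -> b0 <= LL (negp u).
Proof.
  intros [HE [H1 [H2 [H3 H4]]]]. destruct (inEx_ex_pm u HE) as [_ [_ [_ EL]]].
  pose proof (SM_ex u HE) as ES.
  assert (Hpos : forall n, 0 <= SMterm u n) by (intros; apply SMterm_bound).
  apply nz_iff in H2. destruct H2 as [n0 Hn0].
  assert (Hu0 : u n0 < 0). { unfold negp, Rmin in Hn0. destruct (Rle_dec (u n0) 0). lra. lra. }
  assert (0 < SM u).
  { apply Rlt_le_trans with (SMterm u n0); [|apply term_le_sumZ; auto].
    eapply Rlt_le_trans; [|apply SMterm_ge]. unfold negp. rewrite Rmin_left by lra.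
    rewrite Rmult_assoc. unfold PP. rewrite pow_odd_mul by auto. apply Rmult_lt_0_compat. apply Hb.
    apply (powP_pos (u n0)); lra. }
  destruct (bigpoint (negp u) EL ltac:(lra)) as [m Hm].
  assert (Hum : u m < -1). { unfold negp, Rmin in Hm. destruct (Rle_dec (u m) 0). rewrite Rabs_left1 in Hm; lra. rewrite Rabs_R0 in Hm; lra. }
  apply Rle_trans with (SM u); auto. apply Rle_trans with (SMterm u m); [|apply term_le_sumZ; auto].
  eapply Rle_trans; [|apply SMterm_ge]. unfold negp. rewrite Rmin_left by lra.
  rewrite Rmult_assoc. unfold PP. rewrite pow_odd_mul by auto.
  pose proof (powP_ge1 (u m) ltac:(rewrite Rabs_left; lra)). unfold PP in H0. pose proof (Hbb m). pose proof (Hb m). nra.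
Qed.

Lemma LB_N u : Np u -> b0 <= LL u.
Proof.
  intros [HE [H1 H2]]. destruct (inEx_ex u HE) as [_ [EL _]].
  apply nz_iff in H1. destruct H1 as [n0 Hn0].
  assert (0 < AA u).
  { apply Rlt_le_trans with (Aterm u n0); [|apply term_le_sumZ; auto; apply Aterm_nonneg].
    eapply Rlt_le_trans; [|apply Aterm_ge]. apply Rmult_lt_0_compat. apply Hb. apply powP_pos; auto. }
  destruct (bigpoint u EL ltac:(lra)) as [m Hm].
  apply Rle_trans with (AA u); auto. apply Rle_trans with (Aterm u m); [|apply term_le_sumZ; auto; apply Aterm_nonneg].
  eapply Rle_trans; [|apply Aterm_ge].
  pose proof (powP_ge1 (u m) ltac:(lra)). pose proof (Hbb m). pose proof (Hb m). nra.
Qed.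


Lemma Rmax_mono1 x y : x <= y -> Rmax 1 x <= Rmax 1 y.
Proof. intros H. unfold Rmax. destruct (Rle_dec 1 x), (Rle_dec 1 y); lra. Qed.

Section Lim.
Variable w : nat -> Z -> R.
Variable u : Z -> R.
Variable K : R.
Hypothesis Hw : forall j, inEx (w j).
Hypothesis HK : forall j, AA (w j) <= K.
Hypothesis Hl : forall n, is_lim_seq (fun j => w j n) (u n).

Definition Rb := Rmax 1 (K / b0).
Lemma Rb_ge1 : 1 <= Rb.
Proof. apply Rmax_l. Qed.
Lemma w_bound j n : Rabs (w j n) <= Rb.
Proof. eapply Rle_trans. apply u_bound; auto. apply Rmax_mono1. unfold Rdiv. apply Rmult_le_compat_r.
  left; apply Rinv_0_lt_compat; auto. auto. Qed.
Lemma u_lim_bound n : Rabs (u n) <= Rb.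
Proof.
  pose proof (is_lim_seq_le _ (fun _ => Rb) _ Rb (fun j => w_bound j n) (is_lim_seq_abs _ _ (Hl n)) (is_lim_seq_const _)).
  simpl in H; auto.
Qed.

Lemma lim_delta n : is_lim_seq (fun j => Defs.Delta (w j) n) (Defs.Delta u n).
Proof. unfold Defs.Delta. apply is_lim_seq_minus'; auto. Qed.
Lemma lim_delta_p n : is_lim_seq (fun j => Defs.Delta (posp (w j)) n) (Defs.Delta (posp u) n).
Proof. unfold Defs.Delta, posp. apply is_lim_seq_minus'; apply lim_max0; auto. Qed.
Lemma lim_delta_m n : is_lim_seq (fun j => Defs.Delta (negp (w j)) n) (Defs.Delta (negp u) n).
Proof. unfold Defs.Delta, negp. apply is_lim_seq_minus'; apply lim_min0; auto. Qed.

Lemma PL_A n : is_lim_seq (fun j => Aterm (w j) n) (Aterm u n).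
Proof. unfold Aterm. apply is_lim_seq_plus'; apply lim_cm; apply lim_pow; auto. apply lim_delta. Qed.
Lemma PL_SP n : is_lim_seq (fun j => SPterm (w j) n) (SPterm u n).
Proof. unfold SPterm. apply is_lim_seq_plus'; apply is_lim_seq_mult'.
  apply lim_cm, lim_pow, lim_delta. apply lim_delta_p. apply lim_cm, lim_pow; auto. unfold posp; apply lim_max0; auto. Qed.
Lemma PL_SM n : is_lim_seq (fun j => SMterm (w j) n) (SMterm u n).
Proof. unfold SMterm. apply is_lim_seq_plus'; apply is_lim_seq_mult'.
  apply lim_cm, lim_pow, lim_delta. apply lim_delta_m. apply lim_cm, lim_pow; auto. unfold negp; apply lim_min0; auto. Qed.

Lemma lim_BB : is_lim_seq (fun j => BB (w j)) (BB u).
Proof.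
  apply (dctZ (fun j => Bterm (w j)) (Bterm u) (fun n => c n * Rpower Rb q)).
  - intros j n. apply (bounded_terms (w j) Rb Rb_ge1 (w_bound j)).
  - apply exZ_c_scal.
  - intros n. unfold Bterm. apply lim_cm. apply lim_hB. apply Hq2. auto.
Qed.

Lemma lim_LL_gen (f : R -> R) : (forall x, Rabs (f x) <= Rabs x) -> (forall (x : nat -> R) (l : R), is_lim_seq x l -> is_lim_seq (fun j => f (x j)) (f l)) ->
  is_lim_seq (fun j => LL (fun n => f (w j n))) (LL (fun n => f (u n))).
Proof.
  intros Hf Hfl.
  apply (dctZ (fun j => Lterm (fun n => f (w j n))) (Lterm (fun n => f (u n))) (fun n => c n * CL Rb)).
  - intros j n. apply (bounded_terms (fun n => f (w j n)) Rb Rb_ge1). intros m. eapply Rle_trans. apply Hf. apply w_bound.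
  - apply exZ_c_scal.
  - intros n. unfold Lterm. apply lim_cm. apply lim_hL. apply Hq2. apply Hr0. apply Hfl; auto.
Qed.

Lemma lim_LL : is_lim_seq (fun j => LL (w j)) (LL u).
Proof. apply (lim_LL_gen (fun x => x)). intros; lra. auto. Qed.
Lemma lim_LLp : is_lim_seq (fun j => LL (posp (w j))) (LL (posp u)).
Proof. apply (lim_LL_gen (fun x => Rmax x 0)). intros; apply max_prod. apply lim_max0. Qed.
Lemma lim_LLm : is_lim_seq (fun j => LL (negp (w j))) (LL (negp u)).
Proof. apply (lim_LL_gen (fun x => Rmin x 0)). intros; apply min_prod. apply lim_min0. Qed.

Lemma fatou_A (Kj : nat -> R) (Kl : R) : (forall j, AA (w j) <= Kj j) -> is_lim_seq Kj Kl -> inEx u /\ AA u <= Kl.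
Proof. intros H1 H2. apply (fatouZ (fun j => Aterm (w j)) (Aterm u) Kj Kl); auto.
  intros; apply Aterm_nonneg. apply PL_A. Qed.
Lemma fatou_SP (Kj : nat -> R) (Kl : R) : (forall j, SP (w j) <= Kj j) -> is_lim_seq Kj Kl -> SP u <= Kl.
Proof. intros H1 H2. apply (fatouZ (fun j => SPterm (w j)) (SPterm u) Kj Kl); auto.
  intros; apply SPterm_bound. apply PL_SP. intros; apply SP_ex; auto. Qed.
Lemma fatou_SM (Kj : nat -> R) (Kl : R) : (forall j, SM (w j) <= Kj j) -> is_lim_seq Kj Kl -> SM u <= Kl.
Proof. intros H1 H2. apply (fatouZ (fun j => SMterm (w j)) (SMterm u) Kj Kl); auto.
  intros; apply SMterm_bound. apply PL_SM. intros; apply SM_ex; auto. Qed.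

End Lim.


Lemma sign_pm x : (0 <= Rmax x 0 /\ 0 <= Rmin x 0) \/ (Rmax x 0 <= 0 /\ Rmin x 0 <= 0).
Proof. unfold Rmax, Rmin. destruct (Rle_dec x 0); [right|left]; lra. Qed.

Lemma posp_s s x : 0 < s -> Rmax (s * Rmax x 0 + Rmin x 0) 0 = s * Rmax x 0.
Proof. intros Hs. destruct (Rle_dec x 0).
  - rewrite (Rmax_right x 0), (Rmin_left x 0) by lra. rewrite Rmax_right; lra.
  - rewrite (Rmax_left x 0), (Rmin_right x 0) by lra. rewrite Rmax_left; nra. Qed.
Lemma negp_s s x : 0 < s -> Rmin (s * Rmax x 0 + Rmin x 0) 0 = Rmin x 0.
Proof. intros Hs. destruct (Rle_dec x 0).
  - rewrite (Rmax_right x 0), (Rmin_left x 0) by lra. rewrite Rmin_left; lra.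
  - rewrite (Rmax_left x 0), (Rmin_right x 0) by lra. rewrite Rmin_right; nra. Qed.

Lemma shrinkM u : Mp u -> SP u < LL (posp u) -> exists w, Mp w /\ J w < J u.
Proof.
  intros [HE [H1 [H2 [H3 H4]]]] Hlt.
  destruct (cont_pick q r (LL (posp u)) (SP u) (BB (posp u)) 1 Hlt) as [s [[Hs0 Hs1] Hsc]].
  rewrite pow_1 in Hsc.
  set (w := fun n => s * posp u n + negp u n).
  assert (Pw1 : forall n, posp w n = s * posp u n) by (intros; unfold w, posp, negp; apply posp_s; auto).
  assert (Pw2 : forall n, negp w n = negp u n) by (intros; unfold w, posp, negp; apply negp_s; auto).
  assert (Uy : forall n, u n = posp u n + negp u n) by (intros; unfold posp, negp; rewrite max_min_sum; auto).
  assert (Dw : forall n, Defs.Delta w n = s * Defs.Delta (posp u) n + Defs.Delta (negp u) n) by (intros; unfold w, Defs.Delta; ring).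
  assert (Du : forall n, Defs.Delta u n = Defs.Delta (posp u) n + Defs.Delta (negp u) n) by (intros; unfold Defs.Delta; rewrite (Uy n), (Uy (n+1)%Z); ring).
  assert (Dpw : forall n, Defs.Delta (posp w) n = s * Defs.Delta (posp u) n) by (intros; unfold Defs.Delta; rewrite !Pw1; ring).
  assert (Dnw : forall n, Defs.Delta (negp w) n = Defs.Delta (negp u) n) by (intros; unfold Defs.Delta; rewrite !Pw2; ring).
  assert (Sg : forall n, (0 <= Defs.Delta (posp u) n /\ 0 <= Defs.Delta (negp u) n) \/ (Defs.Delta (posp u) n <= 0 /\ Defs.Delta (negp u) n <= 0)).
  { intros n; unfold Defs.Delta, posp, negp. apply posneg_sign. }
  assert (Sg2 : forall n, (0 <= posp u n /\ 0 <= negp u n) \/ (posp u n <= 0 /\ negp u n <= 0)).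
  { intros n; unfold posp, negp. apply sign_pm. }
  assert (Hs01 : 0 <= s <= 1) by lra.
  assert (TA : forall n, 0 <= Aterm w n <= Aterm u n).
  { intros n. split. apply Aterm_nonneg. unfold Aterm. rewrite Dw, Du. change (w n) with (s * posp u n + negp u n). rewrite (Uy n).
    pose proof (Ha n); pose proof (Hb n). unfold PP.
    pose proof (pow_even_mono _ _ k (abs_sy_z s _ _ Hs01 (Sg n))).
    pose proof (pow_even_mono _ _ k (abs_sy_z s _ _ Hs01 (Sg2 n))).
    apply Rplus_le_compat; apply Rmult_le_compat_l; lra. }
  assert (TSP : forall n, SPterm w n <= s * SPterm u n).
  { intros n. unfold SPterm. rewrite Dw, Du, Dpw, Pw1. change (w n) with (s * posp u n + negp u n). rewrite (Uy n).
    destruct (betw k s _ _ Hk Hs01 (Sg n)) as [B1 _]. destruct (betw k s _ _ Hk Hs01 (Sg2 n)) as [B2 _].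
    pose proof (Ha n); pose proof (Hb n). unfold PP.
    set (y := Defs.Delta (posp u) n) in *. set (z := Defs.Delta (negp u) n) in *.
    set (y' := posp u n) in *. set (z' := negp u n) in *.
    assert (a n * s * ((s * y + z) ^ (2 * k - 1) * y) <= a n * s * ((y + z) ^ (2 * k - 1) * y)) by (apply Rmult_le_compat_l; nra).
    assert (b n * s * ((s * y' + z') ^ (2 * k - 1) * y') <= b n * s * ((y' + z') ^ (2 * k - 1) * y')) by (apply Rmult_le_compat_l; nra).
    nra. }
  assert (TSM : forall n, SMterm w n <= SMterm u n).
  { intros n. unfold SMterm. rewrite Dw, Du, Dnw, Pw2. change (w n) with (s * posp u n + negp u n). rewrite (Uy n).
    destruct (betw k s _ _ Hk Hs01 (Sg n)) as [_ B1]. destruct (betw k s _ _ Hk Hs01 (Sg2 n)) as [_ B2].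
    pose proof (Ha n); pose proof (Hb n). unfold PP.
    set (y := Defs.Delta (posp u) n) in *. set (z := Defs.Delta (negp u) n) in *.
    set (y' := posp u n) in *. set (z' := negp u n) in *.
    assert (a n * ((s * y + z) ^ (2 * k - 1) * z) <= a n * ((y + z) ^ (2 * k - 1) * z)) by (apply Rmult_le_compat_l; nra).
    assert (b n * ((s * y' + z') ^ (2 * k - 1) * z') <= b n * ((y' + z') ^ (2 * k - 1) * z')) by (apply Rmult_le_compat_l; nra).
    nra. }
  assert (TB : forall n, Bterm w n <= Bterm u n).
  { intros n. unfold Bterm. apply Rmult_le_compat_l. left; apply Hc. apply hB_mono. apply Hq2. unfold w. rewrite (Uy n).
    apply abs_sy_z; auto. }
  apply nz_iff in H1. destruct H1 as [n0 Hn0].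
  assert (Hu0 : 0 < u n0). { unfold posp, Rmax in Hn0. destruct (Rle_dec (u n0) 0). lra. lra. }
  assert (TB0 : Bterm w n0 < Bterm u n0).
  { unfold Bterm. apply Rmult_lt_compat_l. apply Hc. apply hB_strict. apply Hq2.
    unfold w, posp, negp. rewrite Rmax_left, Rmin_right by lra. rewrite Rplus_0_r. apply Rmult_integral_contrapositive; split; lra.
    unfold w, posp, negp. rewrite Rmax_left, Rmin_right by lra. rewrite Rplus_0_r.
    rewrite Rabs_mult, !Rabs_right by lra. nra. }
  assert (HEw : inEx w) by (apply exZ_le with (Aterm u); auto).
  destruct (inEx_ex_pm u HE) as [EBp [ELp [EBm ELm]]].
  destruct (inEx_ex u HE) as [EB _]. destruct (inEx_ex w HEw) as [EBw _].
  exists w. split.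
  - split; [auto|split; [|split; [|split]]].
    + apply nz_iff. exists n0. rewrite Pw1. apply Rmult_integral_contrapositive; split; lra.
    + apply nz_iff. apply nz_iff in H2. destruct H2 as [n1 Hn1]. exists n1. rewrite Pw2; auto.
    + assert (SP w <= s * SP u).
      { unfold SP. rewrite <- sumZ_scal. apply sumZ_le; auto. apply SP_ex; auto. apply exZ_scal, SP_ex; auto. }
      assert (LL (posp w) = Rpower s q * (LL (posp u) + r * ln s * BB (posp u))).
      { assert (Ep : forall n, Lterm (posp w) n = Rpower s q * (Lterm (posp u) n + r * ln s * Bterm (posp u) n)).
        { intros n. unfold Lterm, Bterm. rewrite Pw1. rewrite hL_scale; auto. ring. }
        unfold LL, BB. rewrite (sumZ_ext _ _ Ep).
        rewrite sumZ_scal, sumZ_plus, sumZ_scal; auto. apply exZ_scal; auto. }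
      lra.
    + assert (SM w <= SM u) by (apply sumZ_le; auto; apply SM_ex; auto).
      assert (LL (negp w) = LL (negp u)) by (apply sumZ_ext; intros; unfold Lterm; rewrite Pw2; auto).
      lra.
  - unfold J. assert (AA w <= AA u) by (apply sumZ_le; auto; intros; apply TA).
    assert (BB w < BB u).
    { assert (0 < sumZ (fun n => Bterm u n - Bterm w n)).
      { apply sumZ_pos with n0. intros; pose proof (TB n); lra. apply exZ_minus; auto. lra. }
      rewrite sumZ_minus in H0 by auto. unfold BB; lra. }
    pose proof alpha_pos; pose proof beta_pos. nra.
Qed.


Lemma posp_neg u n : posp (fun m => - u m) n = - negp u n.
Proof. unfold posp, negp. destruct (Rle_dec (u n) 0).
  - rewrite Rmin_left, Rmax_left by lra. auto.
  - rewrite Rmin_right, Rmax_right by lra. ring. Qed.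
Lemma negp_neg u n : negp (fun m => - u m) n = - posp u n.
Proof. unfold posp, negp. destruct (Rle_dec (u n) 0).
  - rewrite Rmin_right, Rmax_right by lra. ring.
  - rewrite Rmin_left, Rmax_left by lra. auto. Qed.

Lemma negM u : Mp u -> Mp (fun n => - u n) /\ SM (fun n => - u n) = SP u /\ LL (negp (fun n => - u n)) = LL (posp u) /\ J (fun n => - u n) = J u.
Proof.
  intros [HE [H1 [H2 [H3 H4]]]].
  set (v := fun n => - u n).
  assert (TA : forall n, Aterm v n = Aterm u n).
  { intros n; unfold Aterm, v, Defs.Delta, PP. replace (- u (n+1)%Z - - u n) with (- (u (n+1)%Z - u n)) by ring.
    rewrite !pow_even_neg. auto. }
  assert (TSP : forall n, SPterm v n = SMterm u n).
  { intros n; unfold SPterm, SMterm, Defs.Delta, PP, v. rewrite !posp_neg.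
    replace (- u (n+1)%Z - - u n) with (- (u (n+1)%Z - u n)) by ring. rewrite !pow_odd_neg by auto. ring. }
  assert (TSM : forall n, SMterm v n = SPterm u n).
  { intros n; unfold SPterm, SMterm, Defs.Delta, PP, v. rewrite !negp_neg.
    replace (- u (n+1)%Z - - u n) with (- (u (n+1)%Z - u n)) by ring. rewrite !pow_odd_neg by auto. ring. }
  assert (TLp : forall n, Lterm (posp v) n = Lterm (negp u) n) by (intros; unfold Lterm, v; rewrite posp_neg, hL_opp; auto).
  assert (TLm : forall n, Lterm (negp v) n = Lterm (posp u) n) by (intros; unfold Lterm, v; rewrite negp_neg, hL_opp; auto).
  assert (TB : forall n, Bterm v n = Bterm u n) by (intros; unfold Bterm, v; rewrite hB_opp; auto).
  assert (HEv : inEx v) by (apply exZ_ext with (Aterm u); auto).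
  assert (ESM : SM v = SP u) by (apply sumZ_ext; auto).
  assert (ESP : SP v = SM u) by (apply sumZ_ext; auto).
  assert (ELp : LL (posp v) = LL (negp u)) by (apply sumZ_ext; auto).
  assert (ELm : LL (negp v) = LL (posp u)) by (apply sumZ_ext; auto).
  split; [|split; [auto|split; [auto|]]].
  - split; [auto|split; [|split; [|split]]].
    + apply nz_iff. apply nz_iff in H2. destruct H2 as [n Hn]. exists n. unfold v. rewrite posp_neg. lra.
    + apply nz_iff. apply nz_iff in H1. destruct H1 as [n Hn]. exists n. unfold v. rewrite negp_neg. lra.
    + rewrite ESP, ELp; auto.
    + rewrite ESM, ELm; auto.
  - unfold J. f_equal; f_equal. apply sumZ_ext; auto. apply sumZ_ext; auto.
Qed.

Lemma shrinkM_minus u : Mp u -> SM u < LL (negp u) -> exists w, Mp w /\ J w < J u.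
Proof.
  intros HM Hlt. destruct (negM u HM) as [HM' [E1 [E2 E3]]].
  destruct (shrinkM _ HM') as [w [Hw Hj]].
  { destruct HM as [HE _]. 
    assert (SP (fun n => - u n) = SM u) by (apply sumZ_ext; intros n; unfold SPterm, SMterm, Defs.Delta, PP;
      rewrite !posp_neg; replace (- u (n+1)%Z - - u n) with (- (u (n+1)%Z - u n)) by ring; rewrite !pow_odd_neg by auto; ring).
    assert (LL (posp (fun n => - u n)) = LL (negp u)) by (apply sumZ_ext; intros; unfold Lterm; rewrite posp_neg, hL_opp; auto).
    lra. }
  exists w; split; auto. lra.
Qed.

Lemma shrinkN u : Np u -> AA u < LL u -> exists w, Np w /\ J w < J u.
Proof.
  intros [HE [H1 H2]] Hlt.
  destruct (cont_pick q r (LL u) (AA u) (BB u) PP Hlt) as [s [[Hs0 Hs1] Hsc]].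
  set (w := fun n => s * u n).
  destruct (inEx_ex u HE) as [EB [EL _]].
  assert (TA : forall n, Aterm w n = s ^ PP * Aterm u n).
  { intros n; unfold Aterm, w, Defs.Delta. replace (s * u (n+1)%Z - s * u n) with (s * (u (n+1)%Z - u n)) by ring.
    rewrite !Rpow_mult_distr. ring. }
  assert (HEw : inEx w) by (apply exZ_ext with (fun n => s ^ PP * Aterm u n); [intros; auto|apply exZ_scal; auto]).
  assert (EA : AA w = s ^ PP * AA u) by (unfold AA; rewrite <- sumZ_scal; apply sumZ_ext; auto).
  assert (EBw : BB w = Rpower s q * BB u).
  { unfold BB. rewrite <- sumZ_scal. apply sumZ_ext; intros n; unfold Bterm, w. rewrite hB_scale; auto. ring. all: try apply Hq2. }
  assert (ELw : LL w = Rpower s q * (LL u + r * ln s * BB u)).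
  { assert (Ep : forall n, Lterm w n = Rpower s q * (Lterm u n + r * ln s * Bterm u n)).
    { intros n. unfold Lterm, Bterm, w. rewrite hL_scale; auto. ring. all: try apply Hq2; try apply Hr0. }
    unfold LL, BB. rewrite (sumZ_ext _ _ Ep).
    rewrite sumZ_scal, sumZ_plus, sumZ_scal; auto. apply exZ_scal; auto. }
  apply nz_iff in H1. destruct H1 as [n0 Hn0].
  assert (HBpos : 0 < BB u).
  { apply Rlt_le_trans with (Bterm u n0). unfold Bterm. apply Rmult_lt_0_compat. apply Hc. apply hB_pos; auto.
    apply term_le_sumZ; auto. intros; unfold Bterm; pose proof (Hc n); pose proof (hB_nonneg q (u n)); nra. }
  assert (Hsq : Rpower s q < 1).
  { unfold Rpower. rewrite <- exp_0. apply exp_increasing. assert (ln s < 0) by (rewrite <- ln_1; apply ln_increasing; lra).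
    pose proof Hq2. nra. }
  assert (HsP : s ^ PP <= 1) by (rewrite <- (pow1 PP); apply pow_incr; lra).
  exists w. split.
  - split; auto. split.
    + apply nz_iff. exists n0. unfold w. apply Rmult_integral_contrapositive; split; lra.
    + rewrite EA, ELw. auto.
  - unfold J. rewrite EA, EBw. pose proof alpha_pos; pose proof beta_pos. pose proof (AA_nonneg u HE).
    pose proof (pow_le s PP ltac:(lra)).
    assert (s ^ PP * AA u <= AA u) by nra. assert (Rpower s q * BB u < BB u) by nra. nra.
Qed.


Lemma WZ_le f g N : (forall n, f n <= g n) -> WZ f N <= WZ g N.
Proof. intros H. unfold WZ. apply Rplus_le_compat; apply sum_le_fun; intros; apply H. Qed.
Lemma WZ_scal x f N : WZ (fun n => x * f n) N = x * WZ f N.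
Proof. unfold WZ. rewrite Rmult_plus_distr_l, <- (sum_scal_n (Fp f) x N), <- (sum_scal_n (Fm f) x N).
  f_equal; apply sum_ext_n; intros; reflexivity. Qed.

Lemma big_T (C cm : R) : 0 <= C -> 0 < cm -> exists T, 0 < T /\ C * T ^ PP <= cm * hL q r T.
Proof.
  intros HC Hcm.
  set (t := Rmax 1 (C / (cm * r * (q - p)))).
  assert (Ht1 : 1 <= t) by apply Rmax_l.
  assert (Ht2 : C / (cm * r * (q - p)) <= t) by apply Rmax_r.
  exists (exp t). split. apply exp_pos.
  assert (HT : 0 < exp t) by apply exp_pos.
  rewrite hL_nz by lra. rewrite Rabs_right by lra. rewrite ln_exp.
  replace (exp (q * t)) with (Rpower (exp t) q) by (unfold Rpower; rewrite ln_exp; auto).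
  replace q with (p + (q - p)) at 1 by ring. rewrite Rpower_plus.
  rewrite Hpk at 1. rewrite Rpower_pow by auto. fold PP.
  assert (Hqp : 0 < q - p) by lra.
  assert (HE : (q - p) * t < Rpower (exp t) (q - p)).
  { unfold Rpower. rewrite ln_exp. pose proof (exp_ineq1 ((q - p) * t)). assert (0 < (q - p) * t) by (apply Rmult_lt_0_compat; lra). assert ((q - p) * t <> 0) by lra. specialize (H H1). lra. }
  assert (C <= cm * r * ((q - p) * t)).
  { assert (Hd : 0 < cm * r * (q - p)) by (apply Rmult_lt_0_compat; [apply Rmult_lt_0_compat|]; lra).
    assert (Ec : C = cm * r * (q - p) * (C / (cm * r * (q - p)))) by (field; lra).
    rewrite Ec at 1. replace (cm * r * ((q - p) * t)) with (cm * r * (q - p) * t) by ring.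
    apply Rmult_le_compat_l; lra. }
  assert (0 <= exp t ^ PP) by (apply pow_le; lra).
  assert (C <= cm * r * Rpower (exp t) (q - p)).
  { eapply Rle_trans; [eassumption|]. apply Rmult_le_compat_l; [apply Rmult_le_pos; lra|lra]. }
  assert (C * exp t ^ PP <= cm * r * Rpower (exp t) (q - p) * exp t ^ PP) by nra.
  assert (cm * r * Rpower (exp t) (q - p) * exp t ^ PP <= cm * r * Rpower (exp t) (q - p) * exp t ^ PP * t).
  { rewrite <- (Rmult_1_r (cm * r * Rpower (exp t) (q - p) * exp t ^ PP)) at 1. apply Rmult_le_compat_l; auto.
    pose proof (Rpower_pos (exp t) (q - p)). pose proof Hr. apply Rmult_le_pos; [|auto]. apply Rmult_le_pos; [|lra]. nra. }
  nra.
Qed.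

Lemma witness : exists u, Mp u.
Proof.
  set (C0 := WZ (fun n => a n + b n) 1).
  assert (HC0 : 0 <= C0) by (apply WZ_nonneg; intros; pose proof (Ha n); pose proof (Hb n); lra).
  set (cm := Rmin (c 0%Z) (c 1%Z)).
  assert (Hcm : 0 < cm) by (apply Rmin_pos; apply Hc).
  destruct (big_T (2 ^ PP * C0) cm ltac:(apply Rmult_le_pos; [apply pow_le; lra|auto]) Hcm) as [T [HT HTb]].
  set (u := fun n : Z => if Z.eq_dec n 0 then T else if Z.eq_dec n 1 then - T else 0).
  assert (Hub : forall n, Rabs (u n) <= T).
  { intros n; unfold u. destruct (Z.eq_dec n 0). rewrite Rabs_right; lra. destruct (Z.eq_dec n 1).
    rewrite Rabs_Ropp, Rabs_right; lra. rewrite Rabs_R0; lra. }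
  assert (Hu0 : forall n, n <> 0%Z -> n <> 1%Z -> u n = 0).
  { intros n H1 H2; unfold u. destruct (Z.eq_dec n 0); [lia|]. destruct (Z.eq_dec n 1); [lia|auto]. }
  assert (HPP : (0 < PP)%nat) by (unfold PP; lia).
  destruct (finite_supp (Aterm u) 1) as [EA SA].
  { intros n Hn. unfold Aterm, Defs.Delta. rewrite !Hu0 by lia. rewrite pow_i by auto.
    replace (0 - 0) with 0 by ring. rewrite pow_i by auto. ring. }
  assert (HE : inEx u) by exact EA.
  assert (HAA : AA u <= 2 ^ PP * C0 * T ^ PP).
  { unfold AA. rewrite SA. eapply Rle_trans. apply (WZ_le _ (fun n => (2 * T) ^ PP * (a n + b n))).
    - intros n. unfold Aterm. pose proof (Ha n); pose proof (Hb n).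
      assert (Rabs (Defs.Delta u n) <= Rabs (2 * T)).
      { rewrite (Rabs_right (2 * T)) by lra. unfold Defs.Delta. eapply Rle_trans. apply Rabs_triang. rewrite Rabs_Ropp.
        pose proof (Hub (n+1)%Z); pose proof (Hub n); lra. }
      assert (Rabs (u n) <= Rabs (2 * T)) by (rewrite (Rabs_right (2 * T)) by lra; pose proof (Hub n); lra).
      unfold PP in *. pose proof (pow_even_mono _ _ k H1). pose proof (pow_even_mono _ _ k H2). nra.
    - rewrite WZ_scal. fold C0. rewrite Rpow_mult_distr. lra. }
  assert (HLp : LL (posp u) = c 0%Z * hL q r T).
  { destruct (finite_supp (Lterm (posp u)) 0) as [_ S].
    { intros n Hn. unfold Lterm, posp. assert (E : Rmax (u n) 0 = 0).
      { destruct (Z.eq_dec n 1) as [->|]. unfold u; simpl; rewrite Rmax_right; lra. rewrite Hu0 by lia; rewrite Rmax_right; lra. }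
      rewrite E, hL_0; ring. }
    unfold LL. rewrite S. unfold WZ, Fp, Fm. rewrite !sum_O. simpl. unfold Lterm, posp, u. simpl.
    rewrite Rmax_left by lra. rewrite Rmax_right by lra. rewrite hL_0. ring. }
  assert (HLm : LL (negp u) = c 1%Z * hL q r T).
  { destruct (finite_supp (Lterm (negp u)) 1) as [_ S].
    { intros n Hn. unfold Lterm, negp. rewrite Hu0 by lia. rewrite Rmin_left by lra. rewrite hL_0; ring. }
    unfold LL. rewrite S. unfold WZ, Fp, Fm. rewrite !sumS, !sum_O. simpl. unfold Lterm, negp, u. simpl.
    rewrite (Rmin_right T 0) by lra. rewrite (Rmin_left (-T) 0) by lra. rewrite (Rmin_left 0 0) by lra. rewrite hL_0, hL_opp. ring. }
  assert (HhL : 0 <= cm * hL q r T).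
  { eapply Rle_trans; [|apply HTb]. apply Rmult_le_pos. apply Rmult_le_pos. apply pow_le; lra. auto. apply pow_le; lra. }
  assert (HhL' : 0 <= hL q r T) by (apply Rmult_le_reg_l with cm; auto; lra).
  assert (c0b : cm * hL q r T <= c 0%Z * hL q r T) by (apply Rmult_le_compat_r; auto; apply Rmin_l).
  assert (c1b : cm * hL q r T <= c 1%Z * hL q r T) by (apply Rmult_le_compat_r; auto; apply Rmin_r).
  assert (SP u <= AA u) by (apply sumZ_le; auto; [intros; apply SPterm_bound|apply SP_ex; auto]).
  assert (SM u <= AA u) by (apply sumZ_le; auto; [intros; apply SMterm_bound|apply SM_ex; auto]).
  exists u. split; [auto|split; [|split; [|split]]].
  - apply nz_iff. exists 0%Z. unfold posp, u. simpl. rewrite Rmax_left; lra.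
  - apply nz_iff. exists 1%Z. unfold negp, u. simpl. rewrite Rmin_left; lra.
  - rewrite HLp. lra.
  - rewrite HLm. lra.
Qed.


Lemma minseq (S : (Z -> R) -> Prop) : (forall v, S v -> inEx v) -> (exists v, S v) ->
  exists m (w : nat -> Z -> R) (u0 : Z -> R), (forall v, S v -> m <= J v) /\ (forall j, S (w j)) /\
    (forall j, J (w j) <= m + / (INR j + 1)) /\ (forall n, is_lim_seq (fun j => w j n) (u0 n)) /\
    (forall j, AA (w j) <= (m + 1) / alpha).
Proof.
  intros HSE [v0 Hv0].
  destruct (glb_ex (fun y => exists v, S v /\ y = J v)) as [m [Hm0 [Hm1 Hm2]]].
  - exists (J v0); exists v0; auto.
  - intros y [v [Hv ->]]. apply J_nonneg; auto.
  - assert (Hpos : forall j : nat, 0 < / (INR j + 1)).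
    { intros j; apply Rinv_0_lt_compat; pose proof (pos_INR j); lra. }
    assert (Hle1 : forall j : nat, / (INR j + 1) <= 1).
    { intros j. rewrite <- Rinv_1. apply Rinv_le_contravar; [lra|pose proof (pos_INR j); lra]. }
    assert (Hseq : forall j : nat, exists v, S v /\ J v < m + / (INR j + 1)).
    { intros j. destruct (Hm2 _ (Hpos j)) as [y [[v [Hv ->]] Hy]]. exists v; auto. }
    set (v := fun j => proj1_sig (constructive_indefinite_description _ (Hseq j))).
    assert (Hv : forall j, S (v j) /\ J (v j) < m + / (INR j + 1)).
    { intros j. unfold v. destruct (constructive_indefinite_description _ _); simpl; auto. }
    assert (HvE : forall j, inEx (v j)) by (intros j; apply HSE, Hv).
    assert (HvA : forall j, AA (v j) <= (m + 1) / alpha).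
    { intros j. destruct (Hv j) as [_ HJ]. unfold J in HJ. pose proof (BB_nonneg _ (HvE j)). pose proof beta_pos.
      pose proof alpha_pos. specialize (Hle1 j).
      apply Rmult_le_reg_l with alpha; auto. replace (alpha * ((m + 1) / alpha)) with (m + 1) by (field; lra). nra. }
    destruct (subseq_exists v (Rb ((m + 1) / alpha)) (w_bound v ((m + 1) / alpha) HvE HvA)) as [u0 [phi [Hphi Hlim]]].
    exists m, (fun j => v (phi j)), u0. split; [|split; [|split; [|split]]].
    + intros w Hw. apply Hm1. exists w; auto.
    + intros j; apply Hv.
    + intros j. destruct (Hv (phi j)) as [_ HJ]. left. eapply Rlt_le_trans; [apply HJ|].
      apply Rplus_le_compat_l. apply Rinv_le_contravar. pose proof (pos_INR j); lra.
      apply Rplus_le_compat_r. apply le_INR; auto.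
    + auto.
    + intros j; apply HvA.
Qed.


Lemma LL_zero : LL (fun _ => 0) = 0.
Proof. apply sumZ_zero. intros; unfold Lterm; rewrite hL_0; ring. Qed.

Lemma lim_K (m : R) (w : nat -> Z -> R) (u0 : Z -> R) :
  is_lim_seq (fun j => BB (w j)) (BB u0) ->
  is_lim_seq (fun j => (m + / (INR j + 1) - beta * BB (w j)) / alpha) ((m - beta * BB u0) / alpha).
Proof.
  intros H. unfold Rdiv. apply is_lim_seq_mult'; [|apply is_lim_seq_const].
  replace (m - beta * BB u0) with (m + 0 - beta * BB u0) by ring.
  apply is_lim_seq_minus'. apply is_lim_seq_plus'. apply is_lim_seq_const. apply lim_inv1. apply lim_cm; auto.
Qed.

Lemma limit_common (S : (Z -> R) -> Prop) (m : R) (w : nat -> Z -> R) (u0 : Z -> R) :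
  (forall v, S v -> inEx v) -> (forall j, S (w j)) ->
  (forall j, J (w j) <= m + / (INR j + 1)) -> (forall n, is_lim_seq (fun j => w j n) (u0 n)) ->
  (forall j, AA (w j) <= (m + 1) / alpha) -> inEx u0 /\ J u0 <= m.
Proof.
  intros HSE HS HJ Hl HA.
  assert (Hw : forall j, inEx (w j)) by (intros; apply HSE; auto).
  pose proof (lim_BB w u0 _ Hw HA Hl) as LB.
  destruct (fatou_A w u0 Hw Hl (fun j => (m + / (INR j + 1) - beta * BB (w j)) / alpha) ((m - beta * BB u0) / alpha)) as [HE HAu].
  - intros j. specialize (HJ j). unfold J in HJ. pose proof alpha_pos.
    apply Rmult_le_reg_l with alpha; auto. rewrite mul_div_cancel by lra. lra.
  - apply lim_K; auto.
  - split; auto. unfold J. pose proof alpha_pos.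
    apply Rmult_le_compat_l with (r := alpha) in HAu; [|lra]. rewrite mul_div_cancel in HAu by lra. lra.
Qed.

Lemma mainM : exists u0, Mp u0 /\ SP u0 = LL (posp u0) /\ SM u0 = LL (negp u0) /\ (forall v, Mp v -> J u0 <= J v) /\ 0 < J u0.
Proof.
  assert (HSE : forall v, Mp v -> inEx v) by (intros v H; apply H).
  destruct (minseq Mp HSE witness) as [m [w [u0 [Hm [HS [HJ [Hl HA]]]]]]].
  destruct (limit_common Mp m w u0 HSE HS HJ Hl HA) as [HE HJu].
  assert (Hw : forall j, inEx (w j)) by (intros; apply HSE; auto).
  assert (HSP : SP u0 <= LL (posp u0)).
  { apply (fatou_SP w u0 Hw Hl (fun j => LL (posp (w j)))). intros j; apply HS. apply (lim_LLp w u0 _ Hw HA Hl). }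
  assert (HSM : SM u0 <= LL (negp u0)).
  { apply (fatou_SM w u0 Hw Hl (fun j => LL (negp (w j)))). intros j; apply HS. apply (lim_LLm w u0 _ Hw HA Hl). }
  assert (Lp : b0 <= LL (posp u0)).
  { pose proof (is_lim_seq_le (fun _ => b0) _ b0 _ (fun j => LB_plus (w j) (HS j)) (is_lim_seq_const _) (lim_LLp w u0 _ Hw HA Hl)). auto. }
  assert (Lm : b0 <= LL (negp u0)).
  { pose proof (is_lim_seq_le (fun _ => b0) _ b0 _ (fun j => LB_minus (w j) (HS j)) (is_lim_seq_const _) (lim_LLm w u0 _ Hw HA Hl)). auto. }
  assert (Hp0 : posp u0 <> (fun _ => 0)) by (intros E; rewrite E, LL_zero in Lp; lra).
  assert (Hn0 : negp u0 <> (fun _ => 0)) by (intros E; rewrite E, LL_zero in Lm; lra).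
  assert (HM : Mp u0) by (split; auto).
  pose proof (Hm u0 HM).
  exists u0. split; [auto|split; [|split; [|split]]].
  - destruct (Rle_lt_or_eq_dec _ _ HSP) as [Hlt|]; auto. exfalso.
    destruct (shrinkM u0 HM Hlt) as [w' [Hw' Hj']]. specialize (Hm w' Hw'). lra.
  - destruct (Rle_lt_or_eq_dec _ _ HSM) as [Hlt|]; auto. exfalso.
    destruct (shrinkM_minus u0 HM Hlt) as [w' [Hw' Hj']]. specialize (Hm w' Hw'). lra.
  - intros v Hv. specialize (Hm v Hv). lra.
  - apply nz_iff in Hp0. destruct Hp0 as [n0 Hn].
    assert (u0 n0 <> 0) by (intros E; apply Hn; unfold posp; rewrite E; rewrite Rmax_left; lra).
    destruct (inEx_ex u0 HE) as [EB _].
    assert (0 < BB u0).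
    { apply Rlt_le_trans with (Bterm u0 n0). unfold Bterm. apply Rmult_lt_0_compat. apply Hc. apply hB_pos; auto.
      apply term_le_sumZ; auto. intros; unfold Bterm; pose proof (Hc n); pose proof (hB_nonneg q (u0 n)); nra. }
    unfold J. pose proof alpha_pos; pose proof beta_pos; pose proof (AA_nonneg u0 HE). nra.
Qed.

Lemma mainN : exists u0, Np u0 /\ AA u0 = LL u0 /\ (forall v, Np v -> J u0 <= J v) /\ 0 < J u0.
Proof.
  assert (HSE : forall v, Np v -> inEx v) by (intros v H; apply H).
  assert (Hex : exists v, Np v) by (destruct witness as [v Hv]; exists v; apply Mp_Np; auto).
  destruct (minseq Np HSE Hex) as [m [w [u0 [Hm [HS [HJ [Hl HA]]]]]]].
  destruct (limit_common Np m w u0 HSE HS HJ Hl HA) as [HE HJu].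
  assert (Hw : forall j, inEx (w j)) by (intros; apply HSE; auto).
  assert (HAL : AA u0 <= LL u0).
  { destruct (fatou_A w u0 Hw Hl (fun j => LL (w j)) (LL u0)) as [_ H]; auto. intros j; apply HS. apply (lim_LL w u0 _ Hw HA Hl). }
  assert (L0 : b0 <= LL u0).
  { pose proof (is_lim_seq_le (fun _ => b0) _ b0 _ (fun j => LB_N (w j) (HS j)) (is_lim_seq_const _) (lim_LL w u0 _ Hw HA Hl)). auto. }
  assert (Hu0 : u0 <> (fun _ => 0)) by (intros E; rewrite E, LL_zero in L0; lra).
  assert (HN : Np u0) by (split; auto).
  pose proof (Hm u0 HN).
  exists u0. split; [auto|split; [|split]].
  - destruct (Rle_lt_or_eq_dec _ _ HAL) as [Hlt|]; auto. exfalso.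
    destruct (shrinkN u0 HN Hlt) as [w' [Hw' Hj']]. specialize (Hm w' Hw'). lra.
  - intros v Hv. specialize (Hm v Hv). lra.
  - apply nz_iff in Hu0. destruct Hu0 as [n0 Hn].
    destruct (inEx_ex u0 HE) as [EB _].
    assert (0 < BB u0).
    { apply Rlt_le_trans with (Bterm u0 n0). unfold Bterm. apply Rmult_lt_0_compat. apply Hc. apply hB_pos; auto.
      apply term_le_sumZ; auto. intros; unfold Bterm; pose proof (Hc n); pose proof (hB_nonneg q (u0 n)); nra. }
    unfold J. pose proof alpha_pos; pose proof beta_pos; pose proof (AA_nonneg u0 HE). nra.
Qed.

Lemma finalMN :
  (exists u0, Mset p q r a b c u0 /\
     (forall u, Mset p q r a b c u -> Ifun p q r a b c u0 <= Ifun p q r a b c u) /\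
     0 < Ifun p q r a b c u0) /\
  (exists ubar, Nset p q r a b c ubar /\
     (forall u, Nset p q r a b c u -> Ifun p q r a b c ubar <= Ifun p q r a b c u) /\
     0 < Ifun p q r a b c ubar).
Proof.
  split.
  - destruct mainM as [u0 [HM [E1 [E2 [Hmin Hpos]]]]].
    destruct (Mset_of u0 HM E1 E2) as [HMs HI]. exists u0. split; auto. rewrite HI. split; auto.
    intros u Hu. destruct (Mset_to u Hu) as [HMu HIu]. rewrite HIu. auto.
  - destruct mainN as [u0 [HN [E1 [Hmin Hpos]]]].
    destruct (Nset_of u0 HN E1) as [HNs HI]. exists u0. split; auto. rewrite HI. split; auto.
    intros u Hu. destruct (Nset_to u Hu) as [HNu HIu]. rewrite HIu. auto.
Qed.

End Main.

Theorem lemma2p9 (p q r : R) (a b c : Z -> R)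
  (Hp : 1 < p) (Hpq : p < q) (Hp2 : exists k : nat, (0 < k)%nat /\ p / 2 = INR k)
  (Hr : 1 <= r)
  (Ha : forall n, 0 < a n) (Hb : forall n, 0 < b n) (Hc : forall n, 0 < c n)
  (HC1 : condC1 b) (HC2 : condC2 c) :
  (exists u0, Mset p q r a b c u0 /\
     (forall u, Mset p q r a b c u -> Ifun p q r a b c u0 <= Ifun p q r a b c u) /\
     0 < Ifun p q r a b c u0) /\
  (exists ubar, Nset p q r a b c ubar /\
     (forall u, Nset p q r a b c u -> Ifun p q r a b c ubar <= Ifun p q r a b c u) /\
     0 < Ifun p q r a b c ubar).
Proof.
  destruct Hp2 as [k [Hk Hpk]].
  destruct HC1 as [[b0 [Hb0 Hbb]] _].
  destruct HC2 as [_ Hcs].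
  apply (finalMN p q r a b c k b0); auto.
  rewrite mult_INR. simpl. lra.
Qed.
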